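(* Let $k\ge0$, $f,g\in\mathbf P_k(\Gamma,\mathbb R^+;\mathbb C^3)$, and $\varphi\in C^\infty(\Gamma;\mathbb R^3)$ tangential ($\varphi\cdot n=0$). Then the problem: find $(u,v)\in C^\infty(\Gamma;C^\infty(\mathbb R^+))^2$ ($\mathbb C^3$-valued) with $$\partial_\eta v\times n+\tfrac1\omega u=e^{-\sqrt i\,\eta}f,\qquad -\partial_\eta u\times n+i\omega v=e^{-\sqrt i\,\eta}g\qquad\text{in }\Gamma\times\mathbb R^+,$$ $u(x_\Gamma,0)\times n=\varphi(x_\Gamma)$ for all $x_\Gamma\in\Gamma$, and $\int_0^\infty|u(x_\Gamma,\eta)|^2d\eta<\infty$, $\int_0^\infty|v(x_\Gamma,\eta)|^2d\eta<\infty$ for all $x_\Gamma\in\Gamma$, has a unique solution, and it is of the form $u=e^{-\sqrt i\,\eta}p$, $v=e^{-\sqrt i\,\eta}q$ with $p,q\in\mathbf P_{k+1}(\Gamma,\mathbb R^+;\mathbb C^3)$.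
   Context: $\Gamma$ is a smooth closed surface in $\mathbb R^3$ with unit normal field $n$; $\omega>0$; $\sqrt i:=\frac{\sqrt2}{2}(1+i)$. Functions are of $(x_\Gamma,\eta)\in\Gamma\times\mathbb R^+$. $\mathbf P_k(\Gamma,\mathbb R^+;\mathbb C^3)$ denotes the set of functions $u(x_\Gamma,\eta)=\sum_{j=0}^k a_j(x_\Gamma)\eta^j$ with $a_j\in C^\infty(\Gamma;\mathbb C^3)$. *)

(* Defs.v *)
From Stdlib Require Import Reals.
Open Scope R_scope.

Record R3 := mkR3 { x1 : R; x2 : R; x3 : R }.
Record C := mkC { re : R; im : R }.
Record C3 := mkC3 { c1 : C; c2 : C; c3 : C }.

Definition dot (a b : R3) : R := x1 a * x1 b + x2 a * x2 b + x3 a * x3 b.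
Definition dist3 (a b : R3) : R :=
  sqrt ((x1 a - x1 b)^2 + (x2 a - x2 b)^2 + (x3 a - x3 b)^2).

Definition Cadd (z w : C) : C := mkC (re z + re w) (im z + im w).
Definition Cmul (z w : C) : C :=
  mkC (re z * re w - im z * im w) (re z * im w + im z * re w).
Definition Copp (z : C) : C := mkC (- re z) (- im z).
Definition RC (r : R) : C := mkC r 0.
Definition Cexp (z : C) : C := mkC (exp (re z) * cos (im z)) (exp (re z) * sin (im z)).
Definition sqrti : C := mkC (sqrt 2 / 2) (sqrt 2 / 2).
Definition Edecay (eta : R) : C := Cexp (Cmul (RC (- eta)) sqrti).

Definition C3add (a b : C3) : C3 := mkC3 (Cadd (c1 a) (c1 b)) (Cadd (c2 a) (c2 b)) (Cadd (c3 a) (c3 b)).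
Definition C3opp (a : C3) : C3 := mkC3 (Copp (c1 a)) (Copp (c2 a)) (Copp (c3 a)).
Definition C3scal (z : C) (a : C3) : C3 := mkC3 (Cmul z (c1 a)) (Cmul z (c2 a)) (Cmul z (c3 a)).
Definition C3cross (a : C3) (n : R3) : C3 :=
  mkC3 (Cadd (Cmul (c2 a) (RC (x3 n))) (Copp (Cmul (c3 a) (RC (x2 n)))))
       (Cadd (Cmul (c3 a) (RC (x1 n))) (Copp (Cmul (c1 a) (RC (x3 n)))))
       (Cadd (Cmul (c1 a) (RC (x2 n))) (Copp (Cmul (c2 a) (RC (x1 n))))).
Definition realC3 (a : R3) : C3 := mkC3 (RC (x1 a)) (RC (x2 a)) (RC (x3 a)).
Definition C3norm2 (a : C3) : R :=
  re (c1 a) ^ 2 + im (c1 a) ^ 2 + re (c2 a) ^ 2 + im (c2 a) ^ 2 + re (c3 a) ^ 2 + im (c3 a) ^ 2.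
Definition cproj (j : nat) (a : C3) : R :=
  match j with
  | 0%nat => re (c1 a) | 1%nat => im (c1 a)
  | 2%nat => re (c2 a) | 3%nat => im (c2 a)
  | 4%nat => re (c3 a) | _ => im (c3 a)
  end.

Definition cont4 (F : R -> R -> R -> R -> R) : Prop :=
  forall a b c d eps, 0 < eps -> exists del, 0 < del /\
    forall a' b' c' d', Rabs (a' - a) < del -> Rabs (b' - b) < del ->
      Rabs (c' - c) < del -> Rabs (d' - d) < del ->
      Rabs (F a' b' c' d' - F a b c d) < eps.

Fixpoint Ck (n : nat) (F : R -> R -> R -> R -> R) : Prop :=
  cont4 F /\
  match n with
  | O => True
  | S m => exists D1 D2 D3 D4 : R -> R -> R -> R -> R,
      (forall a b c d, derivable_pt_lim (fun t => F t b c d) a (D1 a b c d)) /\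
      (forall a b c d, derivable_pt_lim (fun t => F a t c d) b (D2 a b c d)) /\
      (forall a b c d, derivable_pt_lim (fun t => F a b t d) c (D3 a b c d)) /\
      (forall a b c d, derivable_pt_lim (fun t => F a b c t) d (D4 a b c d)) /\
      Ck m D1 /\ Ck m D2 /\ Ck m D3 /\ Ck m D4
  end.

Definition smooth4 (F : R -> R -> R -> R -> R) : Prop := forall n, Ck n F.

(* compact, nonempty, and locally a regular level set of a smooth function *)
Definition is_closed_surface (Gam : R3 -> Prop) : Prop :=
  (exists p, Gam p) /\
  (exists M, forall p, Gam p -> dist3 p (mkR3 0 0 0) <= M) /\
  (forall p, (forall eps, 0 < eps -> exists q, Gam q /\ dist3 p q < eps) -> Gam p) /\
  (forall p, Gam p -> exists (psi : R -> R -> R -> R) (r g1 g2 g3 : R),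
     smooth4 (fun a b c _ => psi a b c) /\ 0 < r /\
     derivable_pt_lim (fun t => psi t (x2 p) (x3 p)) (x1 p) g1 /\
     derivable_pt_lim (fun t => psi (x1 p) t (x3 p)) (x2 p) g2 /\
     derivable_pt_lim (fun t => psi (x1 p) (x2 p) t) (x3 p) g3 /\
     (g1 <> 0 \/ g2 <> 0 \/ g3 <> 0) /\
     forall q, dist3 p q < r -> (Gam q <-> psi (x1 q) (x2 q) (x3 q) = 0)).

(* C^infinity(Gamma): restriction to Gamma of a smooth function on the ambient space *)
Definition smoothG (Gam : R3 -> Prop) (h : R3 -> R) : Prop :=
  exists H, smooth4 H /\ forall p, Gam p -> h p = H (x1 p) (x2 p) (x3 p) 0.

Definition smoothG_R3 (Gam : R3 -> Prop) (a : R3 -> R3) : Prop :=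
  smoothG Gam (fun p => x1 (a p)) /\ smoothG Gam (fun p => x2 (a p)) /\
  smoothG Gam (fun p => x3 (a p)).

Definition smoothG_C3 (Gam : R3 -> Prop) (a : R3 -> C3) : Prop :=
  forall j, smoothG Gam (fun p => cproj j (a p)).

Definition unit_normal_field (Gam : R3 -> Prop) (n : R3 -> R3) : Prop :=
  smoothG_R3 Gam n /\
  forall p, Gam p -> dot (n p) (n p) = 1 /\
    forall (g1 g2 g3 : R -> R) (del v1 v2 v3 : R), 0 < del ->
      (forall t, Rabs t < del -> Gam (mkR3 (g1 t) (g2 t) (g3 t))) ->
      mkR3 (g1 0) (g2 0) (g3 0) = p ->
      derivable_pt_lim g1 0 v1 -> derivable_pt_lim g2 0 v2 -> derivable_pt_lim g3 0 v3 ->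
      dot (mkR3 v1 v2 v3) (n p) = 0.

(* C^infinity(Gamma; C^infinity(R^+)) (C^3-valued): restriction to Gamma x [0,oo)
   of a smooth function of (x, eta) in R^3 x R, componentwise *)
Definition smoothGR (Gam : R3 -> Prop) (h : R3 -> R -> R) : Prop :=
  exists H, smooth4 H /\ forall p eta, Gam p -> 0 <= eta -> h p eta = H (x1 p) (x2 p) (x3 p) eta.

Definition smoothGR_C3 (Gam : R3 -> Prop) (u : R3 -> R -> C3) : Prop :=
  forall j, smoothGR Gam (fun p eta => cproj j (u p eta)).

Fixpoint C3poly (a : nat -> R3 -> C3) (p : R3) (eta : R) (k : nat) : C3 :=
  match k with
  | O => a O p
  | S m => C3add (C3poly a p eta m) (C3scal (RC (eta ^ S m)) (a (S m) p))
  end.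

Definition inPk (Gam : R3 -> Prop) (k : nat) (f : R3 -> R -> C3) : Prop :=
  exists a : nat -> R3 -> C3, (forall j, smoothG_C3 Gam (a j)) /\
    forall p eta, Gam p -> 0 <= eta -> f p eta = C3poly a p eta k.

(* integral_0^oo h < oo, for nonnegative h *)
Definition finite_integral_R_plus (h : R -> R) : Prop :=
  (forall T, 0 <= T -> inhabited (Riemann_integrable h 0 T)) /\
  exists M, forall T (pr : Riemann_integrable h 0 T), 0 <= T -> RiemannInt pr <= M.

Definition IsSolution (Gam : R3 -> Prop) (n : R3 -> R3) (omega : R)
  (f g : R3 -> R -> C3) (phi : R3 -> R3) (u v : R3 -> R -> C3) : Prop :=
  smoothGR_C3 Gam u /\ smoothGR_C3 Gam v /\
  (exists du dv : R3 -> R -> C3,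
     (forall p eta j, Gam p -> 0 < eta ->
        derivable_pt_lim (fun t => cproj j (u p t)) eta (cproj j (du p eta)) /\
        derivable_pt_lim (fun t => cproj j (v p t)) eta (cproj j (dv p eta))) /\
     (forall p eta, Gam p -> 0 < eta ->
        C3add (C3cross (dv p eta) (n p)) (C3scal (RC (1 / omega)) (u p eta))
          = C3scal (Edecay eta) (f p eta) /\
        C3add (C3opp (C3cross (du p eta) (n p))) (C3scal (mkC 0 omega) (v p eta))
          = C3scal (Edecay eta) (g p eta))) /\
  (forall p, Gam p -> C3cross (u p 0) (n p) = realC3 (phi p)) /\
  (forall p, Gam p ->
     finite_integral_R_plus (fun eta => C3norm2 (u p eta)) /\
     finite_integral_R_plus (fun eta => C3norm2 (v p eta))).

(* Main.v *)
Require Import Defs.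
From Stdlib Require Import Reals Lra Lia Psatz Nsatz.
Import Defs.
Open Scope R_scope.

Lemma Ceq z w : re z = re w -> im z = im w -> z = w.
Proof. destruct z, w; simpl; intros; subst; reflexivity. Qed.
Lemma C3eq a b : c1 a = c1 b -> c2 a = c2 b -> c3 a = c3 b -> a = b.
Proof. destruct a, b; simpl; intros; subst; reflexivity. Qed.
Ltac c3ext := apply C3eq; apply Ceq; simpl.

Lemma dmul f g x lf lg : derivable_pt_lim f x lf -> derivable_pt_lim g x lg ->
  derivable_pt_lim (fun t => f t * g t) x (lf * g x + f x * lg).
Proof. intros; apply (derivable_pt_lim_mult f g); auto. Qed.
Lemma dplus f g x lf lg : derivable_pt_lim f x lf -> derivable_pt_lim g x lg ->
  derivable_pt_lim (fun t => f t + g t) x (lf + lg).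
Proof. intros; apply (derivable_pt_lim_plus f g); auto. Qed.
Lemma dconst c x : derivable_pt_lim (fun _ => c) x 0.
Proof. apply (derivable_pt_lim_const c). Qed.
Lemma did x : derivable_pt_lim (fun t => t) x 1.
Proof. apply derivable_pt_lim_id. Qed.
Lemma dext f g x l l' : derivable_pt_lim f x l -> (forall t, f t = g t) -> l = l' -> derivable_pt_lim g x l'.
Proof.
  intros D H Hl. subst l'. intros e He. destruct (D e He) as [d Hd]. exists d.
  intros h H0 H1. rewrite <- !H. apply Hd; auto.
Qed.
Lemma dscal a f x l : derivable_pt_lim f x l -> derivable_pt_lim (fun t => a * f t) x (a * l).
Proof. intros; refine (dext _ _ _ _ _ (dmul (fun _ => a) f x 0 l (dconst a x) H) _ _); intros; simpl; ring. Qed.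
Lemma dexp_lin a x : derivable_pt_lim (fun t => exp (a * t)) x (a * exp (a * x)).
Proof.
  refine (dext _ _ _ _ _ (derivable_pt_lim_comp (fun t => a * t) exp x a _ _ _) _ _).
  - refine (dext _ _ _ _ _ (dscal a _ x _ (did x)) _ _); intros; simpl; ring.
  - apply derivable_pt_lim_exp.
  - intros; reflexivity.
  - simpl; ring.
Qed.
Lemma dcos_lin a x : derivable_pt_lim (fun t => cos (a * t)) x (- a * sin (a * x)).
Proof.
  refine (dext _ _ _ _ _ (derivable_pt_lim_comp (fun t => a * t) cos x a _ _ _) _ _).
  - refine (dext _ _ _ _ _ (dscal a _ x _ (did x)) _ _); intros; simpl; ring.
  - apply derivable_pt_lim_cos.
  - intros; reflexivity.
  - simpl; ring.
Qed.
Lemma dsin_lin a x : derivable_pt_lim (fun t => sin (a * t)) x (a * cos (a * x)).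
Proof.
  refine (dext _ _ _ _ _ (derivable_pt_lim_comp (fun t => a * t) sin x a _ _ _) _ _).
  - refine (dext _ _ _ _ _ (dscal a _ x _ (did x)) _ _); intros; simpl; ring.
  - apply derivable_pt_lim_sin.
  - intros; reflexivity.
  - simpl; ring.
Qed.
Lemma dpow j x : derivable_pt_lim (fun t => t ^ j) x (INR j * x ^ pred j).
Proof. apply derivable_pt_lim_pow. Qed.

Lemma dloc f g x l : 0 < x -> (forall t, 0 < t -> f t = g t) ->
  derivable_pt_lim f x l -> derivable_pt_lim g x l.
Proof.
  intros Hx H D e He. destruct (D e He) as [d Hd].
  assert (Hm : 0 < Rmin d x) by (apply Rmin_pos; [apply cond_pos| lra]).
  exists (mkposreal _ Hm). intros h H0 H1. simpl in H1.
  assert (Hm1 := Rmin_l d x); assert (Hm2 := Rmin_r d x).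
  apply Rabs_def2 in H1; destruct H1.
  rewrite <- !H by lra. apply Hd; auto. apply Rabs_def1; lra.
Qed.

Lemma cont4_const K : cont4 (fun _ _ _ _ => K).
Proof. intros a b c d e He. exists 1; split; [lra|]. intros. rewrite Rminus_diag, Rabs_R0; lra. Qed.
Lemma cont4_p1 : cont4 (fun a _ _ _ => a).
Proof. intros a b c d e He. exists e; split; auto. Qed.
Lemma cont4_p2 : cont4 (fun _ b _ _ => b).
Proof. intros a b c d e He. exists e; split; auto. Qed.
Lemma cont4_p3 : cont4 (fun _ _ c _ => c).
Proof. intros a b c d e He. exists e; split; auto. Qed.
Lemma cont4_p4 : cont4 (fun _ _ _ d => d).
Proof. intros a b c d e He. exists e; split; auto. Qed.

Lemma cont4_plus F G : cont4 F -> cont4 G -> cont4 (fun a b c d => F a b c d + G a b c d).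
Proof.
  intros HF HG a b c d e He.
  destruct (HF a b c d (e/2)) as [d1 [Hd1 H1]]; [lra|].
  destruct (HG a b c d (e/2)) as [d2 [Hd2 H2]]; [lra|].
  exists (Rmin d1 d2); split; [apply Rmin_pos; auto|].
  intros. assert (Hm1 := Rmin_l d1 d2); assert (Hm2 := Rmin_r d1 d2).
  specialize (H1 a' b' c' d'); specialize (H2 a' b' c' d').
  replace (F a' b' c' d' + G a' b' c' d' - (F a b c d + G a b c d)) with
    ((F a' b' c' d' - F a b c d) + (G a' b' c' d' - G a b c d)) by ring.
  eapply Rle_lt_trans; [apply Rabs_triang|].
  assert (Rabs (F a' b' c' d' - F a b c d) < e/2) by (apply H1; lra).
  assert (Rabs (G a' b' c' d' - G a b c d) < e/2) by (apply H2; lra). lra.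
Qed.

Lemma cont4_mult F G : cont4 F -> cont4 G -> cont4 (fun a b c d => F a b c d * G a b c d).
Proof.
  intros HF HG a b c d e He.
  set (f0 := F a b c d). set (g0 := G a b c d).
  assert (Hf0 := Rabs_pos f0). assert (Hg0 := Rabs_pos g0).
  destruct (HF a b c d (e / (2 * (Rabs g0 + 1)))) as [d1 [Hd1 H1]].
  { apply Rdiv_lt_0_compat; lra. }
  destruct (HG a b c d (Rmin 1 (e / (2 * (Rabs f0 + 1))))) as [d2 [Hd2 H2]].
  { apply Rmin_pos; [lra|apply Rdiv_lt_0_compat; lra]. }
  exists (Rmin d1 d2); split; [apply Rmin_pos; auto|].
  intros. assert (Hm1 := Rmin_l d1 d2); assert (Hm2 := Rmin_r d1 d2).
  assert (A1 : Rabs (F a' b' c' d' - f0) < e / (2 * (Rabs g0 + 1))) by (apply H1; lra).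
  assert (A2 : Rabs (G a' b' c' d' - g0) < Rmin 1 (e / (2 * (Rabs f0 + 1)))) by (apply H2; lra).
  assert (A3 := Rmin_l 1 (e / (2 * (Rabs f0 + 1)))).
  assert (A4 := Rmin_r 1 (e / (2 * (Rabs f0 + 1)))).
  set (f1 := F a' b' c' d') in *. set (g1 := G a' b' c' d') in *.
  replace (f1 * g1 - f0 * g0) with ((f1 - f0) * g1 + f0 * (g1 - g0)) by ring.
  eapply Rle_lt_trans; [apply Rabs_triang|]. rewrite !Rabs_mult.
  assert (B1 : Rabs g1 <= Rabs g0 + 1).
  { replace g1 with (g0 + (g1 - g0)) by ring. eapply Rle_trans; [apply Rabs_triang|]. lra. }
  assert (B2 : Rabs (f1 - f0) * Rabs g1 <= e/2).
  { apply Rle_trans with (e / (2 * (Rabs g0 + 1)) * (Rabs g0 + 1)).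
    apply Rmult_le_compat; try apply Rabs_pos; lra.
    right; field; lra. }
  assert (B3 : Rabs f0 * Rabs (g1 - g0) < e/2).
  { assert (Y : 0 < e / (2 * (Rabs f0 + 1))) by (apply Rdiv_lt_0_compat; lra).
    apply Rle_lt_trans with (Rabs f0 * (e / (2 * (Rabs f0 + 1)))).
    apply Rmult_le_compat; try apply Rabs_pos; lra.
    apply Rlt_le_trans with ((Rabs f0 + 1) * (e / (2 * (Rabs f0 + 1)))). nra.
    replace ((Rabs f0 + 1) * (e / (2 * (Rabs f0 + 1)))) with (e/2) by (field; lra). lra. }
  lra.
Qed.

Lemma Ck_cont n F : Ck n F -> cont4 F.
Proof. destruct n; simpl; tauto. Qed.

Lemma Ck_mono n : forall F, Ck (S n) F -> Ck n F.
Proof.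
  induction n; intros F H.
  - simpl in *. tauto.
  - destruct H as [Hc [D1 [D2 [D3 [D4 [H1 [H2 [H3 [H4 [K1 [K2 [K3 K4]]]]]]]]]]]].
    split; auto. exists D1, D2, D3, D4; repeat split; auto.
Qed.

Lemma Ck_const n : forall K, Ck n (fun _ _ _ _ => K).
Proof.
  induction n; intros K; split; try apply cont4_const; auto.
  exists (fun _ _ _ _ => 0), (fun _ _ _ _ => 0), (fun _ _ _ _ => 0), (fun _ _ _ _ => 0).
  repeat split; intros; try apply dconst; apply IHn.
Qed.

Lemma Ck_plus n : forall F G, Ck n F -> Ck n G -> Ck n (fun a b c d => F a b c d + G a b c d).
Proof.
  induction n; intros F G HF HG.
  - split; auto. apply cont4_plus; apply Ck_cont with 0%nat; auto.
  - destruct HF as [Hc [D1 [D2 [D3 [D4 [H1 [H2 [H3 [H4 [K1 [K2 [K3 K4]]]]]]]]]]]].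
    destruct HG as [Hc' [E1 [E2 [E3 [E4 [J1 [J2 [J3 [J4 [L1 [L2 [L3 L4]]]]]]]]]]]].
    split; [apply cont4_plus; auto|].
    exists (fun a b c d => D1 a b c d + E1 a b c d), (fun a b c d => D2 a b c d + E2 a b c d),
      (fun a b c d => D3 a b c d + E3 a b c d), (fun a b c d => D4 a b c d + E4 a b c d).
    repeat split; intros; try apply IHn; auto;
    apply (dplus (fun t => _) (fun t => _)); auto.
Qed.

Lemma Ck_mult n : forall F G, Ck n F -> Ck n G -> Ck n (fun a b c d => F a b c d * G a b c d).
Proof.
  induction n; intros F G HF HG.
  - split; auto. apply cont4_mult; apply Ck_cont with 0%nat; auto.
  - assert (HF' := Ck_mono _ _ HF). assert (HG' := Ck_mono _ _ HG).
    destruct HF as [Hc [D1 [D2 [D3 [D4 [H1 [H2 [H3 [H4 [K1 [K2 [K3 K4]]]]]]]]]]]].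
    destruct HG as [Hc' [E1 [E2 [E3 [E4 [J1 [J2 [J3 [J4 [L1 [L2 [L3 L4]]]]]]]]]]]].
    split; [apply cont4_mult; auto|].
    exists (fun a b c d => D1 a b c d * G a b c d + F a b c d * E1 a b c d),
      (fun a b c d => D2 a b c d * G a b c d + F a b c d * E2 a b c d),
      (fun a b c d => D3 a b c d * G a b c d + F a b c d * E3 a b c d),
      (fun a b c d => D4 a b c d * G a b c d + F a b c d * E4 a b c d).
    repeat split; intros; try (apply Ck_plus; apply IHn; auto);
    apply (dmul (fun t => _) (fun t => _)); auto.
Qed.

Lemma Ck_p1 n : Ck n (fun a _ _ _ => a).
Proof.
  destruct n; split; try apply cont4_p1; auto.
  exists (fun _ _ _ _ => 1), (fun _ _ _ _ => 0), (fun _ _ _ _ => 0), (fun _ _ _ _ => 0).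
  repeat split; intros; try apply Ck_const; try apply did; apply dconst.
Qed.
Lemma Ck_p2 n : Ck n (fun _ b _ _ => b).
Proof.
  destruct n; split; try apply cont4_p2; auto.
  exists (fun _ _ _ _ => 0), (fun _ _ _ _ => 1), (fun _ _ _ _ => 0), (fun _ _ _ _ => 0).
  repeat split; intros; try apply Ck_const; try apply did; apply dconst.
Qed.
Lemma Ck_p3 n : Ck n (fun _ _ c _ => c).
Proof.
  destruct n; split; try apply cont4_p3; auto.
  exists (fun _ _ _ _ => 0), (fun _ _ _ _ => 0), (fun _ _ _ _ => 1), (fun _ _ _ _ => 0).
  repeat split; intros; try apply Ck_const; try apply did; apply dconst.
Qed.
Lemma Ck_p4 n : Ck n (fun _ _ _ d => d).
Proof.
  destruct n; split; try apply cont4_p4; auto.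
  exists (fun _ _ _ _ => 0), (fun _ _ _ _ => 0), (fun _ _ _ _ => 0), (fun _ _ _ _ => 1).
  repeat split; intros; try apply Ck_const; try apply did; apply dconst.
Qed.

Lemma cont4_of1 (h : R -> R) : (forall x, derivable_pt h x) -> cont4 (fun _ _ _ d => h d).
Proof.
  intros Hd a b c d e He.
  assert (Hc := derivable_continuous_pt _ _ (Hd d)).
  unfold continuity_pt, continue_in, limit1_in, limit_in in Hc. simpl in Hc.
  destruct (Hc e He) as [del [Hdel H]]. exists del; split; auto.
  intros. destruct (Req_dec d' d) as [->|Hne].
  - rewrite Rminus_diag, Rabs_R0; auto.
  - apply H. split; [split; [exact I| auto]|]. unfold R_dist. auto.
Qed.

Lemma Ck_exp n : forall al, Ck n (fun _ _ _ d => exp (al * d)).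
Proof.
  induction n; intros al.
  - split; auto. apply (cont4_of1 (fun d => exp (al * d))). intros x; exists (al * exp (al * x)); apply dexp_lin.
  - split. apply (cont4_of1 (fun d => exp (al * d))). intros x; exists (al * exp (al * x)); apply dexp_lin.
    exists (fun _ _ _ _ => 0), (fun _ _ _ _ => 0), (fun _ _ _ _ => 0),
      (fun _ _ _ d => al * exp (al * d)).
    repeat split; intros; try apply Ck_const; try apply dconst.
    apply dexp_lin. apply (Ck_mult n (fun _ _ _ _ => al)); auto. apply Ck_const.
Qed.

Lemma Ck_cossin n : forall al, Ck n (fun _ _ _ d => cos (al * d)) /\ Ck n (fun _ _ _ d => sin (al * d)).
Proof.
  assert (Cc : forall al, cont4 (fun _ _ _ d => cos (al * d))).
  { intro al; apply (cont4_of1 (fun d => cos (al * d))). intros x; eexists; apply dcos_lin. }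
  assert (Cs : forall al, cont4 (fun _ _ _ d => sin (al * d))).
  { intro al; apply (cont4_of1 (fun d => sin (al * d))). intros x; eexists; apply dsin_lin. }
  induction n; intros al.
  - split; split; auto.
  - split; (split; [auto|]).
    + exists (fun _ _ _ _ => 0), (fun _ _ _ _ => 0), (fun _ _ _ _ => 0),
      (fun _ _ _ d => - al * sin (al * d)).
      repeat split; intros; try apply Ck_const; try apply dconst.
      apply dcos_lin. apply (Ck_mult n (fun _ _ _ _ => - al)). apply Ck_const. apply IHn.
    + exists (fun _ _ _ _ => 0), (fun _ _ _ _ => 0), (fun _ _ _ _ => 0),
      (fun _ _ _ d => al * cos (al * d)).
      repeat split; intros; try apply Ck_const; try apply dconst.
      apply dsin_lin. apply (Ck_mult n (fun _ _ _ _ => al)). apply Ck_const. apply IHn.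
Qed.

Lemma smooth4_plus F G : smooth4 F -> smooth4 G -> smooth4 (fun a b c d => F a b c d + G a b c d).
Proof. intros HF HG n; apply Ck_plus; auto. Qed.
Lemma smooth4_mult F G : smooth4 F -> smooth4 G -> smooth4 (fun a b c d => F a b c d * G a b c d).
Proof. intros HF HG n; apply Ck_mult; auto. Qed.
Lemma smooth4_const K : smooth4 (fun _ _ _ _ => K).
Proof. intros n; apply Ck_const. Qed.

Lemma Ck_d0 n : forall H, Ck n H -> Ck n (fun a b c _ => H a b c 0).
Proof.
  assert (C0 : forall H, cont4 H -> cont4 (fun a b c _ => H a b c 0)).
  { intros H HH a b c d e He. destruct (HH a b c 0 e He) as [del [Hd Hx]].
    exists del; split; auto. intros; apply Hx; auto. rewrite Rminus_diag, Rabs_R0; auto. }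
  induction n; intros H HH.
  - split; auto. apply C0; apply Ck_cont with 0%nat; auto.
  - destruct HH as [Hc [D1 [D2 [D3 [D4 [H1 [H2 [H3 [H4 [K1 [K2 [K3 K4]]]]]]]]]]]].
    split; [apply C0; auto|].
    exists (fun a b c _ => D1 a b c 0), (fun a b c _ => D2 a b c 0), (fun a b c _ => D3 a b c 0),
      (fun _ _ _ _ => 0).
    repeat split; intros; auto; try apply IHn; auto; try apply dconst; apply Ck_const.
Qed.

Section SG.
Variable Gam : R3 -> Prop.

Lemma sG_ext h h' : smoothG Gam h -> (forall p, Gam p -> h' p = h p) -> smoothG Gam h'.
Proof. intros [H [HH E]] E'. exists H; split; auto. intros; rewrite E'; auto. Qed.
Lemma sG_const K : smoothG Gam (fun _ => K).
Proof. exists (fun _ _ _ _ => K); split; auto. apply smooth4_const. Qed.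
Lemma sG_plus h g : smoothG Gam h -> smoothG Gam g -> smoothG Gam (fun p => h p + g p).
Proof.
  intros [H [HH E]] [G [HG E']]. exists (fun a b c d => H a b c d + G a b c d).
  split. apply smooth4_plus; auto. intros; rewrite E, E'; auto.
Qed.
Lemma sG_mult h g : smoothG Gam h -> smoothG Gam g -> smoothG Gam (fun p => h p * g p).
Proof.
  intros [H [HH E]] [G [HG E']]. exists (fun a b c d => H a b c d * G a b c d).
  split. apply smooth4_mult; auto. intros; rewrite E, E'; auto.
Qed.
Lemma sG_opp h : smoothG Gam h -> smoothG Gam (fun p => - h p).
Proof.
  intros Hh. apply sG_ext with (fun p => (-1) * h p). apply sG_mult; auto. apply sG_const.
  intros; ring.
Qed.

Lemma sGR_ext h h' : smoothGR Gam h -> (forall p e, Gam p -> 0 <= e -> h' p e = h p e) -> smoothGR Gam h'.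
Proof. intros [H [HH E]] E'. exists H; split; auto. intros; rewrite E'; auto. Qed.
Lemma sGR_plus h g : smoothGR Gam h -> smoothGR Gam g -> smoothGR Gam (fun p e => h p e + g p e).
Proof.
  intros [H [HH E]] [G [HG E']]. exists (fun a b c d => H a b c d + G a b c d).
  split. apply smooth4_plus; auto. intros; rewrite E, E'; auto.
Qed.
Lemma sGR_mult h g : smoothGR Gam h -> smoothGR Gam g -> smoothGR Gam (fun p e => h p e * g p e).
Proof.
  intros [H [HH E]] [G [HG E']]. exists (fun a b c d => H a b c d * G a b c d).
  split. apply smooth4_mult; auto. intros; rewrite E, E'; auto.
Qed.
Lemma sGR_const K : smoothGR Gam (fun _ _ => K).
Proof. exists (fun _ _ _ _ => K); split; auto. apply smooth4_const. Qed.
Lemma sGR_lift h : smoothG Gam h -> smoothGR Gam (fun p _ => h p).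
Proof.
  intros [H [HH E]]. exists (fun a b c _ => H a b c 0). split.
  intros n; apply Ck_d0; auto. intros; auto.
Qed.
Lemma sGR_eta : smoothGR Gam (fun _ e => e).
Proof. exists (fun _ _ _ d => d); split; auto. intros n; apply Ck_p4. Qed.
Lemma sGR_exp al : smoothGR Gam (fun _ e => exp (al * e)).
Proof. exists (fun _ _ _ d => exp (al * d)); split; auto. intros n; apply Ck_exp. Qed.
Lemma sGR_cos al : smoothGR Gam (fun _ e => cos (al * e)).
Proof. exists (fun _ _ _ d => cos (al * d)); split; auto. intros n; apply Ck_cossin. Qed.
Lemma sGR_sin al : smoothGR Gam (fun _ e => sin (al * e)).
Proof. exists (fun _ _ _ d => sin (al * d)); split; auto. intros n; apply Ck_cossin. Qed.
Lemma sGR_pow j : smoothGR Gam (fun _ e => e ^ j).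
Proof.
  induction j. apply (sGR_const 1).
  apply sGR_ext with (fun p e => e * e ^ j). apply sGR_mult; auto. apply sGR_eta.
  intros; simpl; ring.
Qed.

Definition sGc (z : R3 -> C) := smoothG Gam (fun p => re (z p)) /\ smoothG Gam (fun p => im (z p)).
Definition sG3 (a : R3 -> C3) := sGc (fun p => c1 (a p)) /\ sGc (fun p => c2 (a p)) /\ sGc (fun p => c3 (a p)).
Definition sGRc (z : R3 -> R -> C) := smoothGR Gam (fun p e => re (z p e)) /\ smoothGR Gam (fun p e => im (z p e)).
Definition sGR3 (a : R3 -> R -> C3) :=
  sGRc (fun p e => c1 (a p e)) /\ sGRc (fun p e => c2 (a p e)) /\ sGRc (fun p e => c3 (a p e)).

Lemma sG3_iff a : sG3 a -> smoothG_C3 Gam a.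
Proof. intros [[A B] [[C' D] [E F]]] j. do 5 (destruct j as [|j]; auto). Qed.
Lemma sG3_of a : smoothG_C3 Gam a -> sG3 a.
Proof. intros H. repeat split; [apply (H 0%nat)|apply (H 1%nat)|apply (H 2%nat)|apply (H 3%nat)|apply (H 4%nat)|apply (H 5%nat)]. Qed.
Lemma sGR3_iff a : sGR3 a -> smoothGR_C3 Gam a.
Proof. intros [[A B] [[C' D] [E F]]] j. do 5 (destruct j as [|j]; auto). Qed.

Lemma sGc_add z w : sGc z -> sGc w -> sGc (fun p => Cadd (z p) (w p)).
Proof. intros [A B] [C' D]; split; simpl; apply sG_plus; auto. Qed.
Lemma sGc_mul z w : sGc z -> sGc w -> sGc (fun p => Cmul (z p) (w p)).
Proof.
  intros [A B] [C' D]; split; simpl.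
  apply sG_plus; [apply sG_mult; auto| apply sG_opp; apply sG_mult; auto].
  apply sG_plus; apply sG_mult; auto.
Qed.
Lemma sGc_const z : sGc (fun _ => z).
Proof. split; apply sG_const. Qed.
Lemma sGc_RC h : smoothG Gam h -> sGc (fun p => RC (h p)).
Proof. split; simpl; auto. apply sG_const. Qed.
Lemma sGc_opp z : sGc z -> sGc (fun p => Copp (z p)).
Proof. intros [A B]; split; simpl; apply sG_opp; auto. Qed.

Lemma sG3_add a b : sG3 a -> sG3 b -> sG3 (fun p => C3add (a p) (b p)).
Proof. intros [A [B C']] [D [E F]]; split; [|split]; simpl; apply sGc_add; auto. Qed.
Lemma sG3_scal z a : sGc z -> sG3 a -> sG3 (fun p => C3scal (z p) (a p)).
Proof. intros Z [A [B C']]; split; [|split]; simpl; apply sGc_mul; auto. Qed.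
Lemma sG3_opp a : sG3 a -> sG3 (fun p => C3opp (a p)).
Proof. intros [A [B C']]; split; [|split]; simpl; apply sGc_opp; auto. Qed.
Lemma sG3_ext a a' : sG3 a -> (forall p, Gam p -> a' p = a p) -> sG3 a'.
Proof.
  intros [[A1 A2] [[B1 B2] [C1 C2]]] E; repeat split;
  match goal with H : smoothG _ _ |- _ => eapply sG_ext; [apply H|]; intros; rewrite E; [reflexivity|auto] end.
Qed.
Lemma sG3_zero : sG3 (fun _ => mkC3 (RC 0) (RC 0) (RC 0)).
Proof. repeat split; apply sG_const. Qed.
Lemma sG3_cross a n : sG3 a -> smoothG_R3 Gam n -> sG3 (fun p => C3cross (a p) (n p)).
Proof.
  intros [A [B C']] [N1 [N2 N3]].
  split; [|split]; simpl; apply sGc_add; try apply sGc_opp; apply sGc_mul; auto; apply sGc_RC; auto.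
Qed.
Lemma sG3_realC3 n : smoothG_R3 Gam n -> sG3 (fun p => realC3 (n p)).
Proof. intros [N1 [N2 N3]]; repeat split; simpl; auto; apply sG_const. Qed.

Lemma sGRc_lift z : sGc z -> sGRc (fun p _ => z p).
Proof. intros [A B]; split; apply sGR_lift; auto. Qed.
Lemma sGR3_lift a : sG3 a -> sGR3 (fun p _ => a p).
Proof. intros [A [B C']]; split; [|split]; apply sGRc_lift; auto. Qed.
Lemma sGR3_add a b : sGR3 a -> sGR3 b -> sGR3 (fun p e => C3add (a p e) (b p e)).
Proof. intros [[A1 A2] [[B1 B2] [C1 C2]]] [[D1 D2] [[E1 E2] [F1 F2]]]; repeat split; simpl; apply sGR_plus; auto. Qed.
Lemma sGRc_mul' z w : sGRc z -> sGRc w -> sGRc (fun p e => Cmul (z p e) (w p e)).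
Proof.
  intros [A B] [C' D]; split; simpl.
  apply sGR_plus; [apply sGR_mult; auto|]. apply sGR_ext with (fun p e => (-1) * (im (z p e) * im (w p e))).
  apply sGR_mult; [apply sGR_const|apply sGR_mult; auto]. intros; ring.
  apply sGR_plus; apply sGR_mult; auto.
Qed.
Lemma sGR3_scal z a : sGRc z -> sGR3 a -> sGR3 (fun p e => C3scal (z p e) (a p e)).
Proof. intros Z [A [B C']]; split; [|split]; simpl; apply sGRc_mul'; auto. Qed.
Lemma sGRc_RCpow j : sGRc (fun _ e => RC (e ^ j)).
Proof. split; simpl. apply sGR_pow. apply sGR_const. Qed.
End SG.

Ltac cx := cbn [re im c1 c2 c3 C3add C3scal C3opp C3cross realC3 Cadd Cmul Copp RC].
Ltac c3x := apply C3eq; apply Ceq; cx.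
Ltac cpx := apply Ceq; cx.

Definition CD (f : R -> C) x (l : C) :=
  derivable_pt_lim (fun t => re (f t)) x (re l) /\ derivable_pt_lim (fun t => im (f t)) x (im l).
Definition C3D (f : R -> C3) x (l : C3) :=
  CD (fun t => c1 (f t)) x (c1 l) /\ CD (fun t => c2 (f t)) x (c2 l) /\ CD (fun t => c3 (f t)) x (c3 l).

Lemma CD_ext f g x l l' : CD f x l -> (forall t, f t = g t) -> l = l' -> CD g x l'.
Proof.
  intros [A B] E L; subst l'; split.
  apply (dext _ _ _ _ _ A); [intros; cbv beta; rewrite E; auto|reflexivity]. apply (dext _ _ _ _ _ B); [intros; cbv beta; rewrite E; auto|reflexivity].
Qed.
Lemma C3D_ext f g x l l' : C3D f x l -> (forall t, f t = g t) -> l = l' -> C3D g x l'.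
Proof.
  intros [A [B C']] E L; subst l'; split; [|split];
  [eapply CD_ext; [apply A| |reflexivity]|eapply CD_ext; [apply B| |reflexivity]|eapply CD_ext; [apply C'| |reflexivity]]; intros; cbv beta; rewrite E; auto.
Qed.
Lemma CD_add f g x lf lg : CD f x lf -> CD g x lg -> CD (fun t => Cadd (f t) (g t)) x (Cadd lf lg).
Proof. intros [A B] [C' D]; split; cx; apply (dplus (fun t => _) (fun t => _)); auto. Qed.
Lemma CD_mul f g x lf lg : CD f x lf -> CD g x lg ->
  CD (fun t => Cmul (f t) (g t)) x (Cadd (Cmul lf (g x)) (Cmul (f x) lg)).
Proof.
  intros [A B] [C' D]; split; cx.
  - refine (dext _ _ _ _ _ (dplus _ _ _ _ _ (dmul _ _ _ _ _ A C') (dscal (-1) _ _ _ (dmul _ _ _ _ _ B D))) _ _).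
    intros; ring. ring.
  - refine (dext _ _ _ _ _ (dplus _ _ _ _ _ (dmul _ _ _ _ _ A D) (dmul _ _ _ _ _ B C')) _ _).
    intros; ring. ring.
Qed.
Lemma CD_const z x : CD (fun _ => z) x (RC 0).
Proof. split; apply dconst. Qed.
Lemma CD_RCpow j x : CD (fun t => RC (t ^ j)) x (RC (INR j * x ^ pred j)).
Proof. split; cx. apply dpow. apply dconst. Qed.
Lemma CD_RCid x : CD (fun t => RC t) x (RC 1).
Proof. split; cx. apply did. apply dconst. Qed.

Definition r2 := sqrt 2 / 2.
Lemma r2_sq : r2 * r2 = / 2.
Proof. unfold r2. replace (sqrt 2 / 2 * (sqrt 2 / 2)) with ((sqrt 2 * sqrt 2) / 4) by field.
  rewrite sqrt_sqrt by lra. field. Qed.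
Lemma r2_pos : 0 < r2.
Proof. unfold r2. assert (0 < sqrt 2) by (apply sqrt_lt_R0; lra). lra. Qed.
Lemma r2_ge : / 2 <= r2.
Proof. assert (H := r2_sq). assert (H0 := r2_pos). nra. Qed.
Lemma sqrti_eq : sqrti = mkC r2 r2.
Proof. reflexivity. Qed.

Lemma Edecay_eq t : Edecay t = mkC (exp (- r2 * t) * cos (- r2 * t)) (exp (- r2 * t) * sin (- r2 * t)).
Proof.
  unfold Edecay, Cexp. rewrite sqrti_eq. cx.
  replace (- t * r2 - 0 * r2) with (- r2 * t) by ring.
  replace (- t * r2 + 0 * r2) with (- r2 * t) by ring. reflexivity.
Qed.

Lemma CD_Edecay x : CD Edecay x (Cmul (Copp sqrti) (Edecay x)).
Proof.
  rewrite sqrti_eq. eapply CD_ext with (f := fun t => mkC (exp (- r2 * t) * cos (- r2 * t)) (exp (- r2 * t) * sin (- r2 * t))).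
  2: { intros; rewrite Edecay_eq; auto. }
  2: { rewrite Edecay_eq. reflexivity. }
  split; cx.
  - refine (dext _ _ _ _ _ (dmul _ _ _ _ _ (dexp_lin (- r2) x) (dcos_lin (- r2) x)) _ _).
    intros; ring. ring.
  - refine (dext _ _ _ _ _ (dmul _ _ _ _ _ (dexp_lin (- r2) x) (dsin_lin (- r2) x)) _ _).
    intros; ring. ring.
Qed.

Lemma C3D_add f g x lf lg : C3D f x lf -> C3D g x lg -> C3D (fun t => C3add (f t) (g t)) x (C3add lf lg).
Proof. intros [A [B C']] [D [E F]]; split; [|split]; cx; apply (CD_add (fun t => _) (fun t => _)); auto. Qed.
Lemma C3D_scal z a x lz la : CD z x lz -> C3D a x la ->
  C3D (fun t => C3scal (z t) (a t)) x (C3add (C3scal lz (a x)) (C3scal (z x) la)).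
Proof. intros Z [A [B C']]; split; [|split]; cx; apply (CD_mul (fun t => _) (fun t => _)); auto. Qed.
Lemma C3D_const a x : C3D (fun _ => a) x (C3scal (RC 0) a).
Proof.
  split; [|split]; cx; (eapply CD_ext; [apply CD_const| intros; reflexivity|]); cpx; ring.
Qed.
Lemma CD_mulc f z x l : CD f x l -> CD (fun t => Cmul (f t) z) x (Cmul l z).
Proof.
  intros H. eapply CD_ext. apply (CD_mul f (fun _ => z)); [apply H|apply CD_const].
  intros; reflexivity. cpx; ring.
Qed.
Lemma CD_opp f x l : CD f x l -> CD (fun t => Copp (f t)) x (Copp l).
Proof.
  intros H. eapply CD_ext. apply (CD_mulc f (RC (-1))); apply H.
  intros; cpx; ring. cpx; ring.
Qed.
Lemma C3D_cross a x la n : C3D a x la -> C3D (fun t => C3cross (a t) n) x (C3cross la n).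
Proof.
  intros [A [B C']]; split; [|split]; cx; apply (CD_add (fun t => _) (fun t => _));
  try apply (CD_opp (fun t => _)); apply (CD_mulc (fun t => _)); auto.
Qed.

Definition Dseq (b : nat -> R3 -> C3) (j : nat) (p : R3) : C3 := C3scal (RC (INR (S j))) (b (S j) p).

Lemma C3D_poly b p x m : C3D (fun t => C3poly b p t (S m)) x (C3poly (Dseq b) p x m).
Proof.
  induction m.
  - cbn [C3poly]. eapply C3D_ext.
    apply C3D_add. apply C3D_const. apply C3D_scal. apply CD_RCpow. apply C3D_const.
    intros; reflexivity. unfold Dseq. c3x; simpl; ring.
  - change (C3D (fun t => C3add (C3poly b p t (S m)) (C3scal (RC (t ^ S (S m))) (b (S (S m)) p))) x
      (C3add (C3poly (Dseq b) p x m) (C3scal (RC (x ^ S m)) (Dseq b (S m) p)))).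
    eapply C3D_ext. apply C3D_add. apply IHm. apply C3D_scal. apply CD_RCpow. apply C3D_const.
    intros; reflexivity. unfold Dseq. c3x; cbn [pred]; ring.
Qed.

Definition zero3 : C3 := mkC3 (RC 0) (RC 0) (RC 0).

Lemma C3poly_lin (Lm : R3 -> C3 -> C3)
  (Hadd : forall q a b, Lm q (C3add a b) = C3add (Lm q a) (Lm q b))
  (Hsc : forall q x a, Lm q (C3scal (RC x) a) = C3scal (RC x) (Lm q a)) b p t m :
  C3poly (fun j q => Lm q (b j q)) p t m = Lm p (C3poly b p t m).
Proof. induction m; simpl; auto. rewrite Hadd, Hsc, IHm; auto. Qed.

Lemma C3poly_add b1 b2 p t m :
  C3poly (fun j q => C3add (b1 j q) (b2 j q)) p t m = C3add (C3poly b1 p t m) (C3poly b2 p t m).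
Proof. induction m; simpl; auto. rewrite IHm. c3x; ring. Qed.

Lemma C3poly_ext b b' p t m : (forall j, (j <= m)%nat -> b j p = b' j p) -> C3poly b p t m = C3poly b' p t m.
Proof. induction m; intros H; simpl. apply H; lia. rewrite IHm, H; auto. Qed.

Lemma C3poly_top b p t k m : (k <= m)%nat -> (forall j, (k < j)%nat -> b j p = zero3) ->
  C3poly b p t m = C3poly b p t k.
Proof.
  intros Hk H. induction m. replace k with 0%nat by lia; auto.
  destruct (Nat.eq_dec k (S m)) as [->|Hne]; auto.
  simpl. rewrite IHm by lia. rewrite H by lia. unfold zero3; c3x; ring.
Qed.

Lemma C3poly_at0 b p m : C3poly b p 0 m = b 0%nat p.
Proof. induction m; simpl; auto. rewrite IHm. c3x; ring. Qed.

Definition dotn (a : C3) (m : R3) : C :=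
  Cadd (Cadd (Cmul (c1 a) (RC (x1 m))) (Cmul (c2 a) (RC (x2 m)))) (Cmul (c3 a) (RC (x3 m))).
Definition Nproj (m : R3) (a : C3) : C3 := C3scal (dotn a m) (realC3 m).
Definition Lseq (b : nat -> R3 -> C3) (j : nat) (p : R3) : C3 :=
  C3add (C3scal (RC (INR (S j))) (b (S j) p)) (C3scal (Copp sqrti) (b j p)).
Definition zext (k : nat) (a : nat -> R3 -> C3) (j : nat) (p : R3) : C3 :=
  if Nat.leb j k then a j p else zero3.
Definition Rseq (n : R3 -> R3) (om : R) (fz gz : nat -> R3 -> C3) (j : nat) (p : R3) : C3 :=
  C3add (C3scal (mkC 0 om) (C3add (fz j p) (C3opp (Nproj (n p) (fz j p)))))
        (C3opp (C3cross (Lseq gz j p) (n p))).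
Definition inv2s : C := mkC (/ (4 * r2)) (- / (4 * r2)).
Fixpoint wd (k : nat) (R : nat -> R3 -> C3) (m : nat) (p : R3) : C3 :=
  match m with
  | O => zero3
  | S m' => C3scal inv2s (C3add (R (k - m')%nat p) (C3scal (RC (INR (k + 1 - m'))) (wd k R m' p)))
  end.
Definition wseq (k : nat) (R : nat -> R3 -> C3) (j : nat) (p : R3) : C3 :=
  if Nat.leb j k then wd k R (S (k - j)) p else zero3.
Definition rcross (a b : R3) : R3 :=
  mkR3 (x2 a * x3 b - x3 a * x2 b) (x3 a * x1 b - x1 a * x3 b) (x1 a * x2 b - x2 a * x1 b).
Definition tseq (n phi : R3 -> R3) (w : nat -> R3 -> C3) (j : nat) (p : R3) : C3 :=
  match j with
  | O => realC3 (rcross (n p) (phi p))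
  | S j' => C3scal (RC (/ INR (S j'))) (w j' p)
  end.
Definition Pseq (om : R) (n : R3 -> R3) (fz t : nat -> R3 -> C3) (j : nat) (p : R3) : C3 :=
  C3add (C3scal (RC om) (Nproj (n p) (fz j p))) (t j p).
Definition Qseq (om : R) (n : R3 -> R3) (gz t : nat -> R3 -> C3) (j : nat) (p : R3) : C3 :=
  C3scal (mkC 0 (- / om)) (C3add (gz j p) (C3cross (Lseq t j p) (n p))).

Lemma inv2s_prop : Cmul (Cmul (RC 2) sqrti) inv2s = RC 1.
Proof. rewrite sqrti_eq; unfold inv2s. assert (H := r2_pos). cpx; field; lra. Qed.

Lemma W_identity k R p j : (forall j, (k < j)%nat -> R j p = zero3) ->
  C3add (C3scal (Cmul (RC 2) sqrti) (wseq k R j p)) (C3scal (RC (- INR (S j))) (wseq k R (S j) p)) = R j p.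
Proof.
  intros HR. unfold wseq.
  destruct (Nat.leb_spec j k) as [Hj|Hj].
  - assert (E : (if Nat.leb (S j) k then wd k R (S (k - S j)) p else zero3) = wd k R (k - j) p).
    { destruct (Nat.leb_spec (S j) k). replace (k - j)%nat with (S (k - S j)) by lia. auto.
      replace (k - j)%nat with 0%nat by lia. reflexivity. }
    rewrite E. cbn [wd]. replace (k - (k - j))%nat with j by lia.
    replace (k + 1 - (k - j))%nat with (S j) by lia.
    set (W := wd k R (k - j) p). set (Rj := R j p).
    assert (H := inv2s_prop). revert H. rewrite sqrti_eq; unfold inv2s. intros H.
    assert (H0 := r2_pos). c3x; field; lra.
  - destruct (Nat.leb_spec (S j) k); [lia|]. rewrite HR by lia. unfold zero3; c3x; ring.
Qed.

Lemma E2_identity om n0 (f0 f1 t0 t1 g0 : C3) (J : R) : om <> 0 ->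
  let P0 := C3add (C3scal (RC om) (Nproj n0 f0)) t0 in
  let P1 := C3add (C3scal (RC om) (Nproj n0 f1)) t1 in
  let LP := C3add (C3scal (RC J) P1) (C3scal (Copp sqrti) P0) in
  let Lt := C3add (C3scal (RC J) t1) (C3scal (Copp sqrti) t0) in
  C3add (C3opp (C3cross LP n0)) (C3scal (mkC 0 om) (C3scal (mkC 0 (- / om)) (C3add g0 (C3cross Lt n0)))) = g0.
Proof. intros Hom. simpl. unfold Nproj, dotn. c3x; field; auto. Qed.

Lemma cross2 (Y : C3) (n0 : R3) : dot n0 n0 = 1 -> dotn Y n0 = RC 0 -> C3cross (C3cross Y n0) n0 = C3opp Y.
Proof.
  intros Hn HY. unfold dotn, dot in *. injection HY; cx; clear HY; intros.
  destruct n0 as [n1 n2 n3]; destruct Y as [[y1 y2] [y3 y4] [y5 y6]]; cbn [re im c1 c2 c3 x1 x2 x3] in *.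
  c3x; nsatz.
Qed.

Lemma E1_alg (n0 : R3) (om J J2 : R) (f g0 g1 t0 w0 w1 : C3) :
  dot n0 n0 = 1 -> om <> 0 -> J <> 0 -> J2 <> 0 ->
  dotn t0 n0 = RC 0 -> dotn w0 n0 = RC 0 -> dotn w1 n0 = RC 0 ->
  C3add (C3scal (Cmul (RC 2) sqrti) w0) (C3scal (RC (- J)) w1) =
    C3add (C3scal (mkC 0 om) (C3add f (C3opp (Nproj n0 f))))
      (C3opp (C3cross (C3add (C3scal (RC J) g1) (C3scal (Copp sqrti) g0)) n0)) ->
  let t1 := C3scal (RC (/ J)) w0 in
  let t2 := C3scal (RC (/ J2)) w1 in
  let A := C3add (C3scal (RC J) t1) (C3scal (Copp sqrti) t0) in
  let B := C3add (C3scal (RC J2) t2) (C3scal (Copp sqrti) t1) in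
  let Q0 := C3scal (mkC 0 (- / om)) (C3add g0 (C3cross A n0)) in
  let Q1 := C3scal (mkC 0 (- / om)) (C3add g1 (C3cross B n0)) in
  C3add (C3cross (C3add (C3scal (RC J) Q1) (C3scal (Copp sqrti) Q0)) n0)
    (C3scal (RC (1 / om)) (C3add (C3scal (RC om) (Nproj n0 f)) t0)) = f.
Proof.
  intros Hn Hom HJ HJ2 Ht0 Hw0 Hw1 HW t1 t2 A B Q0 Q1.
  set (LL := C3add (C3add (C3scal (RC J) w1) (C3scal (Copp (Cmul (RC 2) sqrti)) w0)) (C3scal (mkC 0 1) t0)).
  assert (HLL : C3add (C3scal (RC J) B) (C3scal (Copp sqrti) A) = LL).
  { unfold LL, A, B, t1, t2. rewrite sqrti_eq. assert (Hs : 2 * r2 * r2 = 1) by (rewrite Rmult_assoc, r2_sq; field).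
    set (Ji := / J). set (J2i := / J2).
    assert (E2 : J * Ji = 1) by (unfold Ji; field; auto).
    assert (E3 : J2 * J2i = 1) by (unfold J2i; field; auto).
    clearbody Ji J2i.
    destruct t0 as [[a1 a2] [a3 a4] [a5 a6]]; destruct w0 as [[u1 u2] [u3 u4] [u5 u6]];
    destruct w1 as [[v1 v2] [v3 v4] [v5 v6]].
    c3x; nsatz. }
  assert (Htan : dotn LL n0 = RC 0).
  { unfold LL, dotn in *. rewrite sqrti_eq.
    injection Ht0; injection Hw0; injection Hw1; cx; clear Ht0 Hw0 Hw1; intros.
    cpx; nsatz. }
  assert (HQ : C3add (C3scal (RC J) Q1) (C3scal (Copp sqrti) Q0) =
    C3scal (mkC 0 (- / om)) (C3add (C3add (C3scal (RC J) g1) (C3scal (Copp sqrti) g0))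
       (C3cross (C3add (C3scal (RC J) B) (C3scal (Copp sqrti) A)) n0))).
  { unfold Q0, Q1. c3x; ring. }
  rewrite HQ, HLL.
  set (Lg := C3add (C3scal (RC J) g1) (C3scal (Copp sqrti) g0)) in *.
  assert (HC : C3cross (C3scal (mkC 0 (- / om)) (C3add Lg (C3cross LL n0))) n0 =
    C3scal (mkC 0 (- / om)) (C3add (C3cross Lg n0) (C3cross (C3cross LL n0) n0))).
  { c3x; ring. }
  rewrite HC, (cross2 LL n0 Hn Htan).
  assert (HO : C3opp LL = C3add (C3add (C3scal (Cmul (RC 2) sqrti) w0) (C3scal (RC (- J)) w1))
                                (C3scal (mkC 0 (-1)) t0)).
  { unfold LL. c3x; ring. }
  rewrite HO, HW. clearbody Lg. unfold Nproj, dotn. c3x; field; auto.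
Qed.

Section Constr.
Variables (Gam : R3 -> Prop) (n : R3 -> R3) (om : R) (k : nat) (af ag : nat -> R3 -> C3) (phi : R3 -> R3).
Hypothesis Hn : forall p, Gam p -> dot (n p) (n p) = 1.
Hypothesis Hom : om <> 0.
Hypothesis Hphi : forall p, Gam p -> dot (phi p) (n p) = 0.

Definition fz := zext k af.
Definition gz := zext k ag.
Definition RR := Rseq n om fz gz.
Definition ww := wseq k RR.
Definition tt := tseq n phi ww.
Definition PP := Pseq om n fz tt.
Definition QQ := Qseq om n gz tt.

Lemma zext_big a j p : (k < j)%nat -> zext k a j p = zero3.
Proof. intros H; unfold zext. destruct (Nat.leb_spec j k); auto; lia. Qed.
Lemma zext_small a j p : (j <= k)%nat -> zext k a j p = a j p.
Proof. intros H; unfold zext. destruct (Nat.leb_spec j k); auto; lia. Qed.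

Lemma RR_big j p : (k < j)%nat -> RR j p = zero3.
Proof.
  intros H. unfold RR, Rseq, Lseq, fz, gz. rewrite !zext_big by lia. unfold Nproj, dotn, zero3. c3x; ring.
Qed.

Lemma ww_big j p : (k < j)%nat -> ww j p = zero3.
Proof. intros H; unfold ww, wseq. destruct (Nat.leb_spec j k); auto; lia. Qed.

Lemma tt_big j p : (S k < j)%nat -> tt j p = zero3.
Proof.
  intros H. destruct j as [|j]; [lia|]. unfold tt, tseq. rewrite ww_big by lia. unfold zero3; c3x; ring.
Qed.

Lemma PP_big j p : (S k < j)%nat -> PP j p = zero3.
Proof.
  intros H. unfold PP, Pseq, fz. rewrite zext_big, tt_big by lia. unfold Nproj, dotn, zero3; c3x; ring.
Qed.

Lemma QQ_big j p : (S k < j)%nat -> QQ j p = zero3.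
Proof.
  intros H. unfold QQ, Qseq, Lseq, gz. rewrite zext_big, !tt_big by lia. unfold zero3; c3x; ring.
Qed.

Lemma dotn_add a b m : dotn (C3add a b) m = Cadd (dotn a m) (dotn b m).
Proof. unfold dotn; cpx; ring. Qed.
Lemma dotn_scal z a m : dotn (C3scal z a) m = Cmul z (dotn a m).
Proof. unfold dotn; cpx; ring. Qed.

Lemma RR_tan j p : Gam p -> dotn (RR j p) (n p) = RC 0.
Proof.
  intros Hp. assert (H := Hn p Hp). unfold RR, Rseq, Nproj, dotn, dot in *.
  set (F := fz j p). set (G := Lseq gz j p). clearbody F G.
  destruct (n p) as [n1 n2 n3]; destruct F as [[a1 a2] [a3 a4] [a5 a6]]; destruct G as [[b1 b2] [b3 b4] [b5 b6]].
  cbn [x1 x2 x3] in *. cpx; nsatz.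
Qed.

Lemma wd_tan m p : Gam p -> dotn (wd k RR m p) (n p) = RC 0.
Proof.
  intros Hp. induction m; cbn [wd].
  - unfold zero3, dotn; cpx; ring.
  - rewrite dotn_scal, dotn_add, dotn_scal, IHm, RR_tan by auto. cpx; ring.
Qed.

Lemma ww_tan j p : Gam p -> dotn (ww j p) (n p) = RC 0.
Proof.
  intros Hp. unfold ww, wseq. destruct (Nat.leb j k). apply wd_tan; auto. unfold zero3, dotn; cpx; ring.
Qed.

Lemma tt_tan j p : Gam p -> dotn (tt j p) (n p) = RC 0.
Proof.
  intros Hp. destruct j as [|j]; unfold tt, tseq.
  - unfold dotn, rcross; cpx; cbn [x1 x2 x3]; ring.
  - rewrite dotn_scal, ww_tan by auto. cpx; ring.
Qed.

Lemma ww_W j p : C3add (C3scal (Cmul (RC 2) sqrti) (ww j p)) (C3scal (RC (- INR (S j))) (ww (S j) p)) = RR j p.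
Proof. apply W_identity. intros; apply RR_big; auto. Qed.

Lemma coef_E1 j p : Gam p ->
  C3add (C3cross (Lseq QQ j p) (n p)) (C3scal (RC (1 / om)) (PP j p)) = fz j p.
Proof.
  intros Hp.
  assert (HJ : INR (S j) <> 0) by (apply not_0_INR; lia).
  assert (HJ2 : INR (S (S j)) <> 0) by (apply not_0_INR; lia).
  pose proof (E1_alg (n p) om (INR (S j)) (INR (S (S j))) (fz j p) (gz j p) (gz (S j) p) (tt j p) (ww j p) (ww (S j) p)
    (Hn p Hp) Hom HJ HJ2 (tt_tan j p Hp) (ww_tan j p Hp) (ww_tan (S j) p Hp) (ww_W j p)) as E.
  exact E.
Qed.

Lemma coef_E2 j p :
  C3add (C3opp (C3cross (Lseq PP j p) (n p))) (C3scal (mkC 0 om) (QQ j p)) = gz j p.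
Proof. exact (E2_identity om (n p) (fz j p) (fz (S j) p) (tt j p) (tt (S j) p) (gz j p) (INR (S j)) Hom). Qed.

End Constr.

Section Smooth.
Variable Gam : R3 -> Prop.

Lemma sGc_dotn a m : sG3 Gam a -> smoothG_R3 Gam m -> sGc Gam (fun p => dotn (a p) (m p)).
Proof.
  intros [A [B C']] [M1 [M2 M3]]. unfold dotn.
  apply sGc_add; [apply sGc_add|]; apply sGc_mul; auto; apply sGc_RC; auto.
Qed.
Lemma sG3_Nproj a m : sG3 Gam a -> smoothG_R3 Gam m -> sG3 Gam (fun p => Nproj (m p) (a p)).
Proof. intros; unfold Nproj; apply sG3_scal. apply sGc_dotn; auto. apply sG3_realC3; auto. Qed.
Lemma sG3_Lseq b j : (forall i, sG3 Gam (b i)) -> sG3 Gam (Lseq b j).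
Proof. intros H; unfold Lseq. apply sG3_add; apply sG3_scal; auto; apply sGc_const. Qed.
Lemma sG3_zext k a j : (forall i, sG3 Gam (a i)) -> sG3 Gam (zext k a j).
Proof. intros H; unfold zext. destruct (Nat.leb j k); auto. apply sG3_zero. Qed.
Lemma sG3_Rseq n om fz gz j : smoothG_R3 Gam n -> (forall i, sG3 Gam (fz i)) -> (forall i, sG3 Gam (gz i)) ->
  sG3 Gam (Rseq n om fz gz j).
Proof.
  intros Hn Hf Hg. unfold Rseq. apply sG3_add.
  apply sG3_scal. apply sGc_const. apply sG3_add; auto. apply sG3_opp, sG3_Nproj; auto.
  apply sG3_opp, sG3_cross; auto. apply sG3_Lseq; auto.
Qed.
Lemma sG3_wd k R m : (forall i, sG3 Gam (R i)) -> sG3 Gam (wd k R m).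
Proof.
  intros H. induction m; cbn [wd]. apply sG3_zero.
  apply sG3_scal. apply sGc_const. apply sG3_add; auto. apply sG3_scal; auto. apply sGc_const.
Qed.
Lemma sG3_wseq k R j : (forall i, sG3 Gam (R i)) -> sG3 Gam (wseq k R j).
Proof. intros H; unfold wseq. destruct (Nat.leb j k). apply sG3_wd; auto. apply sG3_zero. Qed.
Lemma sG_R3_rcross a b : smoothG_R3 Gam a -> smoothG_R3 Gam b -> smoothG_R3 Gam (fun p => rcross (a p) (b p)).
Proof.
  intros [A1 [A2 A3]] [B1 [B2 B3]]. unfold rcross; cbn [x1 x2 x3].
  split; [|split]; apply sG_plus; try apply sG_opp; apply sG_mult; auto.
Qed.
Lemma sG3_tseq n phi w j : smoothG_R3 Gam n -> smoothG_R3 Gam phi -> (forall i, sG3 Gam (w i)) ->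
  sG3 Gam (tseq n phi w j).
Proof.
  intros Hn Hp Hw. destruct j; unfold tseq.
  apply sG3_realC3, sG_R3_rcross; auto.
  apply sG3_scal; auto. apply sGc_const.
Qed.
Lemma sG3_Pseq om n fz t j : smoothG_R3 Gam n -> (forall i, sG3 Gam (fz i)) -> (forall i, sG3 Gam (t i)) ->
  sG3 Gam (Pseq om n fz t j).
Proof. intros; unfold Pseq. apply sG3_add; auto. apply sG3_scal. apply sGc_const. apply sG3_Nproj; auto. Qed.
Lemma sG3_Qseq om n gz t j : smoothG_R3 Gam n -> (forall i, sG3 Gam (gz i)) -> (forall i, sG3 Gam (t i)) ->
  sG3 Gam (Qseq om n gz t j).
Proof.
  intros; unfold Qseq. apply sG3_scal. apply sGc_const. apply sG3_add; auto. apply sG3_cross; auto.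
  apply sG3_Lseq; auto.
Qed.

Lemma sGR3_poly b m : (forall j, sG3 Gam (b j)) -> sGR3 Gam (fun p e => C3poly b p e m).
Proof.
  intros H. induction m; cbn [C3poly]. apply sGR3_lift; auto.
  apply sGR3_add; auto. apply sGR3_scal. apply sGRc_RCpow. apply sGR3_lift; auto.
Qed.

Lemma sGRc_Edecay : sGRc Gam (fun _ e => Edecay e).
Proof.
  split; (eapply sGR_ext; [apply sGR_mult; [apply (sGR_exp Gam (- r2))|]|]);
  [apply (sGR_cos Gam (- r2)) | intros; rewrite Edecay_eq; reflexivity
  |apply (sGR_sin Gam (- r2)) | intros; rewrite Edecay_eq; reflexivity].
Qed.

Lemma sGR3_sol b m : (forall j, sG3 Gam (b j)) ->
  smoothGR_C3 Gam (fun p e => C3scal (Edecay e) (C3poly b p e m)).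
Proof. intros H. apply sGR3_iff. apply sGR3_scal. apply sGRc_Edecay. apply sGR3_poly; auto. Qed.
End Smooth.

Lemma sG3_all Gam n om k af ag phi :
  smoothG_R3 Gam n -> smoothG_R3 Gam phi ->
  (forall j, smoothG_C3 Gam (af j)) -> (forall j, smoothG_C3 Gam (ag j)) ->
  (forall j, sG3 Gam (PP n om k af ag phi j)) /\ (forall j, sG3 Gam (QQ n om k af ag phi j)).
Proof.
  intros Hn Hp Hf Hg.
  assert (F : forall j, sG3 Gam (fz k af j)) by (intros; apply sG3_zext; intros; apply sG3_of; auto).
  assert (G' : forall j, sG3 Gam (gz k ag j)) by (intros; apply sG3_zext; intros; apply sG3_of; auto).
  assert (R : forall j, sG3 Gam (RR n om k af ag j)) by (intros; apply sG3_Rseq; auto).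
  assert (W : forall j, sG3 Gam (ww n om k af ag j)) by (intros; apply sG3_wseq; auto).
  assert (T : forall j, sG3 Gam (tt n om k af ag phi j)) by (intros; apply sG3_tseq; auto).
  split; intros j. apply sG3_Pseq; auto. apply sG3_Qseq; auto.
Qed.

Definition solf (b : nat -> R3 -> C3) (k : nat) (p : R3) (e : R) : C3 :=
  C3scal (Edecay e) (C3poly b p e (S k)).

Lemma C3poly_scal z b p t m : C3poly (fun j q => C3scal z (b j q)) p t m = C3scal z (C3poly b p t m).
Proof. induction m; simpl; auto. rewrite IHm. c3x; ring. Qed.

Lemma C3poly_Lseq b p x k : (forall j, (S k < j)%nat -> b j p = zero3) ->
  C3poly (Lseq b) p x (S k) = C3add (C3poly (Dseq b) p x k) (C3scal (Copp sqrti) (C3poly b p x (S k))).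
Proof.
  intros Hb.
  change (Lseq b) with (fun j q => C3add (Dseq b j q) (C3scal (Copp sqrti) (b j q))).
  rewrite C3poly_add, C3poly_scal.
  rewrite (C3poly_top (Dseq b) p x k (S k)); auto.
  intros j Hj; unfold Dseq; rewrite Hb by lia; unfold zero3; c3x; ring.
Qed.

Lemma C3D_sol b k p x : (forall j, (S k < j)%nat -> b j p = zero3) ->
  C3D (fun t => solf b k p t) x (solf (Lseq b) k p x).
Proof.
  intros Hb. unfold solf. eapply C3D_ext. apply C3D_scal. apply CD_Edecay. apply C3D_poly.
  intros; reflexivity. rewrite C3poly_Lseq by auto. c3x; ring.
Qed.

Lemma poly_lin2 (L1 L2 : R3 -> C3 -> C3)
  (H1a : forall q a b, L1 q (C3add a b) = C3add (L1 q a) (L1 q b))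
  (H1s : forall q x a, L1 q (C3scal (RC x) a) = C3scal (RC x) (L1 q a))
  (H2a : forall q a b, L2 q (C3add a b) = C3add (L2 q a) (L2 q b))
  (H2s : forall q x a, L2 q (C3scal (RC x) a) = C3scal (RC x) (L2 q a)) A B p t m :
  C3add (L1 p (C3poly A p t m)) (L2 p (C3poly B p t m)) =
  C3poly (fun j q => C3add (L1 q (A j q)) (L2 q (B j q))) p t m.
Proof. rewrite C3poly_add, !C3poly_lin; auto. Qed.

Lemma Edecay0 : Edecay 0 = RC 1.
Proof. rewrite Edecay_eq. rewrite Rmult_0_r, exp_0, cos_0, sin_0. cpx; ring. Qed.

Section Exist.
Variables (Gam : R3 -> Prop) (n : R3 -> R3) (om : R) (k : nat) (af ag : nat -> R3 -> C3) (phi : R3 -> R3).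
Hypothesis Hn : forall p, Gam p -> dot (n p) (n p) = 1.
Hypothesis Hom : om <> 0.
Hypothesis Hphi : forall p, Gam p -> dot (phi p) (n p) = 0.

Definition usol := solf (PP n om k af ag phi) k.
Definition vsol := solf (QQ n om k af ag phi) k.

Lemma usol_D p x : C3D (fun t => usol p t) x (solf (Lseq (PP n om k af ag phi)) k p x).
Proof. apply C3D_sol. intros; apply PP_big; auto. Qed.
Lemma vsol_D p x : C3D (fun t => vsol p t) x (solf (Lseq (QQ n om k af ag phi)) k p x).
Proof. apply C3D_sol. intros; apply QQ_big; auto. Qed.

Lemma poly_fz p e : C3poly (fz k af) p e (S k) = C3poly af p e k.
Proof.
  rewrite (C3poly_top _ p e k (S k)); auto. apply C3poly_ext; intros; apply zext_small; auto.
  intros; apply zext_big; auto.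
Qed.
Lemma poly_gz p e : C3poly (gz k ag) p e (S k) = C3poly ag p e k.
Proof.
  rewrite (C3poly_top _ p e k (S k)); auto. apply C3poly_ext; intros; apply zext_small; auto.
  intros; apply zext_big; auto.
Qed.

Lemma sol_eq1 p e : Gam p ->
  C3add (C3cross (solf (Lseq (QQ n om k af ag phi)) k p e) (n p)) (C3scal (RC (1 / om)) (usol p e))
  = C3scal (Edecay e) (C3poly af p e k).
Proof.
  intros Hp. unfold usol, solf.
  transitivity (C3scal (Edecay e) (C3add ((fun q a => C3cross a (n q)) p (C3poly (Lseq (QQ n om k af ag phi)) p e (S k)))
     ((fun q a => C3scal (RC (1 / om)) a) p (C3poly (PP n om k af ag phi) p e (S k))))).
  { cbv beta. c3x; ring. }
  rewrite (poly_lin2 (fun q a => C3cross a (n q)) (fun q a => C3scal (RC (1 / om)) a)); try (intros; c3x; ring).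
  rewrite <- poly_fz. f_equal.
  apply C3poly_ext. intros; apply (coef_E1 Gam); auto.
Qed.

Lemma sol_eq2 p e :
  C3add (C3opp (C3cross (solf (Lseq (PP n om k af ag phi)) k p e) (n p))) (C3scal (mkC 0 om) (vsol p e))
  = C3scal (Edecay e) (C3poly ag p e k).
Proof.
  unfold vsol, solf.
  transitivity (C3scal (Edecay e) (C3add ((fun q a => C3opp (C3cross a (n q))) p (C3poly (Lseq (PP n om k af ag phi)) p e (S k)))
     ((fun q a => C3scal (mkC 0 om) a) p (C3poly (QQ n om k af ag phi) p e (S k))))).
  { cbv beta. c3x; ring. }
  rewrite (poly_lin2 (fun q a => C3opp (C3cross a (n q))) (fun q a => C3scal (mkC 0 om) a)); try (intros; c3x; ring).
  rewrite <- poly_gz. f_equal.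
  apply C3poly_ext. intros; apply coef_E2; auto.
Qed.

Lemma sol_bc p : Gam p -> C3cross (usol p 0) (n p) = realC3 (phi p).
Proof.
  intros Hp. unfold usol, solf. rewrite C3poly_at0, Edecay0.
  unfold PP, Pseq, tt, tseq, Nproj, dotn, rcross.
  assert (H1 := Hn p Hp). assert (H2 := Hphi p Hp). unfold dot in *.
  set (F := fz k af 0 p). set (N := n p) in *. set (Ph := phi p) in *. clearbody F N Ph.
  destruct N as [n1 n2 n3]; destruct Ph as [q1 q2 q3];
  destruct F as [[a1 a2] [a3 a4] [a5 a6]]. cbn [x1 x2 x3] in *.
  c3x; cbn [x1 x2 x3]; nsatz.
Qed.
End Exist.

Lemma exp_le a b : a <= b -> exp a <= exp b.
Proof. intros [H| ->]; [left; apply exp_increasing; auto| right; auto]. Qed.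
Lemma exp_ge1 a : 0 <= a -> 1 <= exp a.
Proof. intros; rewrite <- exp_0; apply exp_le; auto. Qed.

Lemma exp_powq y q : exp y ^ q = exp (INR q * y).
Proof.
  induction q. simpl; rewrite Rmult_0_l, exp_0; auto.
  rewrite S_INR. simpl. rewrite IHq, <- exp_plus. f_equal; ring.
Qed.

Lemma pow_le_exp y q : 0 <= y -> y ^ q <= INR q ^ q * exp y.
Proof.
  intros Hy. destruct q as [|q].
  - simpl. rewrite Rmult_1_l. apply exp_ge1; auto.
  - set (Q := INR (S q)). assert (HQ : 0 < Q) by (apply lt_0_INR; lia).
    assert (A : y / Q <= exp (y / Q)).
    { assert (H := exp_ineq1_le (y / Q)). lra. }
    assert (B : (y / Q) ^ S q <= exp (y / Q) ^ S q).
    { apply pow_incr. split; auto. unfold Rdiv; apply Rmult_le_pos; [lra| left; apply Rinv_0_lt_compat; lra]. }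
    rewrite exp_powq in B. fold Q in B. replace (Q * (y / Q)) with y in B by (field; lra).
    replace y with (Q * (y / Q)) at 1 by (field; lra). rewrite Rpow_mult_distr.
    apply Rmult_le_compat_l; auto. apply pow_le; lra.
Qed.

Lemma pow_exp_half q : exists K, 0 <= K /\ forall x, 0 <= x -> x ^ q <= K * exp (x / 2).
Proof.
  exists (2 ^ q * INR q ^ q). split.
  apply Rmult_le_pos; apply pow_le; [lra| apply pos_INR].
  intros x Hx. replace x with (2 * (x / 2)) at 1 by field. rewrite Rpow_mult_distr, Rmult_assoc.
  apply Rmult_le_compat_l. apply pow_le; lra. apply pow_le_exp; lra.
Qed.

Lemma C3norm2_pos a : 0 <= C3norm2 a.
Proof. unfold C3norm2. repeat apply Rplus_le_le_0_compat; apply pow2_ge_0. Qed.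
Lemma C3norm2_add a b : C3norm2 (C3add a b) <= 2 * C3norm2 a + 2 * C3norm2 b.
Proof.
  assert (K : forall x y, (x + y) ^ 2 <= 2 * x ^ 2 + 2 * y ^ 2) by (intros x y; assert (0 <= (x - y) * (x - y)) by apply Rle_0_sqr; nra).
  unfold C3norm2; cx.
  repeat match goal with |- context [(?x + ?y) ^ 2] => 
    let h := fresh in assert (h := K x y); set ((x + y) ^ 2) in * end.
  lra.
Qed.
Lemma C3norm2_scal z a : C3norm2 (C3scal z a) = (re z ^ 2 + im z ^ 2) * C3norm2 a.
Proof. unfold C3norm2; cx; ring. Qed.

Lemma Edecay_norm e : re (Edecay e) ^ 2 + im (Edecay e) ^ 2 = exp (- (2 * r2) * e).
Proof.
  rewrite Edecay_eq; cbn [re im].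
  replace (- (2 * r2) * e) with (- r2 * e + - r2 * e) by ring. rewrite exp_plus.
  assert (H := sin2_cos2 (- r2 * e)). unfold Rsqr in H.
  replace ((exp (- r2 * e) * cos (- r2 * e)) ^ 2 + (exp (- r2 * e) * sin (- r2 * e)) ^ 2) with
    (exp (- r2 * e) * exp (- r2 * e) * (sin (- r2 * e) * sin (- r2 * e) + cos (- r2 * e) * cos (- r2 * e))) by ring.
  rewrite H; ring.
Qed.

Lemma poly_bound b p m : exists C, 0 <= C /\ forall e, 0 <= e -> C3norm2 (C3poly b p e m) <= C * exp (e / 2).
Proof.
  induction m.
  - exists (C3norm2 (b 0%nat p)). split. apply C3norm2_pos. intros e He. simpl.
    rewrite <- (Rmult_1_r (C3norm2 _)) at 1. apply Rmult_le_compat_l. apply C3norm2_pos. apply exp_ge1; lra.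
  - destruct IHm as [C [HC H]]. destruct (pow_exp_half (2 * S m)) as [K [HK HKx]].
    exists (2 * C + 2 * (K * C3norm2 (b (S m) p))). split.
    assert (0 <= C3norm2 (b (S m) p)) by apply C3norm2_pos. nra.
    intros e He. cbn [C3poly]. eapply Rle_trans; [apply C3norm2_add|].
    rewrite C3norm2_scal. cx.
    assert (E1 := H e He). assert (E2 := HKx e He).
    assert (0 <= C3norm2 (b (S m) p)) by apply C3norm2_pos.
    replace ((e ^ S m) ^ 2 + 0 ^ 2) with ((e ^ S m) ^ 2) by ring.
    assert (E3 : (e ^ S m) ^ 2 <= K * exp (e / 2)) by (rewrite <- pow_mult, Nat.mul_comm; auto).
    assert (E4 : (e ^ S m) ^ 2 * C3norm2 (b (S m) p) <= K * exp (e / 2) * C3norm2 (b (S m) p))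
      by (apply Rmult_le_compat_r; auto).
    lra.
Qed.

Lemma sol_bound b k p : exists C, 0 <= C /\ forall e, 0 <= e -> C3norm2 (solf b k p e) <= C * exp (- e / 2).
Proof.
  destruct (poly_bound b p (S k)) as [C [HC H]]. exists C; split; auto.
  intros e He. unfold solf. rewrite C3norm2_scal, Edecay_norm.
  eapply Rle_trans. apply Rmult_le_compat_l. left; apply exp_pos. apply H; auto.
  rewrite (Rmult_comm C), <- Rmult_assoc, <- exp_plus, Rmult_comm.
  apply Rmult_le_compat_l; auto. apply exp_le.
  assert (H2 := r2_ge). nra.
Qed.

Lemma FTC_gen (f F : R -> R) a b (pr : Riemann_integrable f a b) :
  a <= b -> (forall x, derivable_pt_lim F x (f x)) -> (forall x, continuity_pt f x) ->
  RiemannInt pr = F b - F a.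
Proof.
  intros Hab HF Hc.
  assert (C0 : forall x, a <= x <= b -> continuity_pt f x) by auto.
  rewrite (RiemannInt_P20 Hab (FTC_P1 Hab C0) pr).
  assert (A1 := RiemannInt_P29 Hab C0).
  assert (A2 : antiderivative f F a b).
  { split; auto. intros x _. exists (exist _ (f x) (HF x)). symmetry; apply derive_pt_eq_0; auto. }
  destruct (antiderivative_Ucte _ _ _ _ _ A1 A2) as [c Hc'].
  rewrite (Hc' b), (Hc' a) by lra. ring.
Qed.

Lemma dsq g x l : derivable_pt_lim g x l -> derivable_pt_lim (fun t => g t ^ 2) x (2 * g x * l).
Proof. intros H. apply (dext _ _ _ _ _ (dmul g g x l l H H)). intros; simpl; ring. ring. Qed.

Lemma C3norm2_D f x l : C3D f x l -> derivable_pt (fun t => C3norm2 (f t)) x.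
Proof.
  intros [[A1 A2] [[B1 B2] [C1 C2]]]. unfold C3norm2. eexists.
  repeat apply (dplus (fun t => _) (fun t => _)); apply (dsq (fun t => _)); eassumption.
Qed.

Lemma dhalf C x : derivable_pt_lim (fun e => C * exp (- e / 2)) x (C * (- / 2 * exp (- x / 2))).
Proof.
  apply (dext _ _ _ _ _ (dscal C _ _ _ (dexp_lin (- / 2) x))).
  intros t; replace (- / 2 * t) with (- t / 2) by field; reflexivity.
  replace (- / 2 * x) with (- x / 2) by field; reflexivity.
Qed.

Lemma decay_int C : forall T (pr : Riemann_integrable (fun e => C * exp (- e / 2)) 0 T), 0 <= T -> 0 <= C ->
  RiemannInt pr <= 2 * C.
Proof.
  intros T pr HT HC.
  rewrite (FTC_gen _ (fun e => - 2 * C * exp (- e / 2)) 0 T pr HT).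
  - replace (- 0 / 2) with 0 by field. rewrite exp_0.
    assert (0 < exp (- T / 2)) by apply exp_pos. nra.
  - intros x. apply (dext _ _ _ _ _ (dhalf (- 2 * C) x)). intros; reflexivity. field.
  - intros x. apply derivable_continuous_pt. eexists. apply dhalf.
Qed.

Lemma sol_integrable b k p : (forall j, (S k < j)%nat -> b j p = zero3) ->
  finite_integral_R_plus (fun e => C3norm2 (solf b k p e)).
Proof.
  intros Hb.
  assert (Hc : forall x, continuity_pt (fun e => C3norm2 (solf b k p e)) x).
  { intros x. apply derivable_continuous_pt. eapply C3norm2_D. apply C3D_sol; auto. }
  split.
  - intros T HT. constructor. apply continuity_implies_RiemannInt; auto.
  - destruct (sol_bound b k p) as [C [HC HB]]. exists (2 * C). intros T pr HT.
    assert (pr2 : Riemann_integrable (fun e => C * exp (- e / 2)) 0 T).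
    { apply continuity_implies_RiemannInt; auto. intros x _. apply derivable_continuous_pt. eexists.
      apply dhalf. }
    eapply Rle_trans; [|apply (decay_int C T pr2 HT HC)].
    apply RiemannInt_P19; auto. intros x Hx. apply HB. lra.
Qed.

Definition Ccont (z : R -> C) := forall t, continuity_pt (fun s => re (z s)) t /\ continuity_pt (fun s => im (z s)) t.
Definition C3cont (f : R -> C3) := Ccont (fun s => c1 (f s)) /\ Ccont (fun s => c2 (f s)) /\ Ccont (fun s => c3 (f s)).

Lemma cplus f g x : continuity_pt f x -> continuity_pt g x -> continuity_pt (fun t => f t + g t) x.
Proof. intros; apply (continuity_pt_plus f g); auto. Qed.
Lemma cminus f g x : continuity_pt f x -> continuity_pt g x -> continuity_pt (fun t => f t - g t) x.
Proof. intros; apply (continuity_pt_minus f g); auto. Qed.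
Lemma cmult f g x : continuity_pt f x -> continuity_pt g x -> continuity_pt (fun t => f t * g t) x.
Proof. intros; apply (continuity_pt_mult f g); auto. Qed.
Lemma cconst c x : continuity_pt (fun _ => c) x.
Proof. apply continuity_pt_const. intros a b; reflexivity. Qed.
Lemma cext f g x : continuity_pt f x -> (forall t, f t = g t) -> continuity_pt g x.
Proof.
  intros H E. unfold continuity_pt, continue_in, limit1_in, limit_in in *. intros e He.
  destruct (H e He) as [d [Hd Hx]]. exists d; split; auto. intros y Hy. rewrite <- !E. apply Hx; auto.
Qed.

Lemma Ccont_add z w : Ccont z -> Ccont w -> Ccont (fun t => Cadd (z t) (w t)).
Proof. intros A B t; destruct (A t), (B t); split; cx; apply cplus; auto. Qed.
Lemma Ccont_mul z w : Ccont z -> Ccont w -> Ccont (fun t => Cmul (z t) (w t)).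
Proof.
  intros A B t; destruct (A t), (B t); split; cx.
  apply cminus; apply cmult; auto. apply cplus; apply cmult; auto.
Qed.
Lemma Ccont_const z : Ccont (fun _ => z).
Proof. intros t; split; apply cconst. Qed.
Lemma Ccont_CD z : (forall t, exists l, CD z t l) -> Ccont z.
Proof.
  intros H t; destruct (H t) as [l [A B]]; split; apply derivable_continuous_pt; eexists; eauto.
Qed.
Lemma Ccont_opp z : Ccont z -> Ccont (fun t => Copp (z t)).
Proof.
  intros A t; destruct (A t); split; cx; [eapply cext; [apply (cmult (fun _ => -1)); [apply cconst|apply H]|]
  |eapply cext; [apply (cmult (fun _ => -1)); [apply cconst|apply H0]|]]; intros; cbv beta; ring.
Qed.
Lemma C3cont_add f g : C3cont f -> C3cont g -> C3cont (fun t => C3add (f t) (g t)).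
Proof. intros [A [B C']] [D [E F]]; split; [|split]; cx; apply (Ccont_add (fun t => _) (fun t => _)); auto. Qed.
Lemma C3cont_scal z f : Ccont z -> C3cont f -> C3cont (fun t => C3scal (z t) (f t)).
Proof. intros Z [A [B C']]; split; [|split]; cx; apply (Ccont_mul (fun t => _) (fun t => _)); auto. Qed.
Lemma C3cont_cross f n0 : C3cont f -> C3cont (fun t => C3cross (f t) n0).
Proof.
  intros [A [B C']]; split; [|split]; cx; apply (Ccont_add (fun t => _) (fun t => _));
  try apply (Ccont_opp (fun t => _));
  apply (Ccont_mul (fun t => _) (fun t => _)); auto; apply Ccont_const.
Qed.
Lemma C3cont_C3D f : (forall t, exists l, C3D f t l) -> C3cont f.
Proof.
  intros H; split; [|split]; apply Ccont_CD; intros t; destruct (H t) as [l [A [B C']]]; eauto.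
Qed.
Lemma C3cont_opp f : C3cont f -> C3cont (fun t => C3opp (f t)).
Proof. intros [A [B C']]; split; [|split]; cx; apply (Ccont_opp (fun t => _)); auto. Qed.

Definition Cexpl (lam : C) (t : R) : C := Cexp (Cmul (RC t) lam).
Lemma Cexpl_eq lam t : Cexpl lam t = mkC (exp (re lam * t) * cos (im lam * t)) (exp (re lam * t) * sin (im lam * t)).
Proof. unfold Cexpl, Cexp. cx. f_equal; f_equal; f_equal; ring. Qed.
Lemma CD_Cexpl lam x : CD (Cexpl lam) x (Cmul lam (Cexpl lam x)).
Proof.
  eapply CD_ext with (f := fun t => mkC (exp (re lam * t) * cos (im lam * t)) (exp (re lam * t) * sin (im lam * t))).
  2: { intros; rewrite Cexpl_eq; auto. }
  2: { rewrite Cexpl_eq. reflexivity. }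
  split; cx.
  - refine (dext _ _ _ _ _ (dmul _ _ _ _ _ (dexp_lin (re lam) x) (dcos_lin (im lam) x)) _ _).
    intros; ring. ring.
  - refine (dext _ _ _ _ _ (dmul _ _ _ _ _ (dexp_lin (re lam) x) (dsin_lin (im lam) x)) _ _).
    intros; ring. ring.
Qed.
Lemma Cexpl_0 lam : Cexpl lam 0 = RC 1.
Proof. rewrite Cexpl_eq. rewrite !Rmult_0_r, exp_0, cos_0, sin_0. cpx; ring. Qed.
Lemma Cexpl_inv lam t : Cmul (Cexpl lam t) (Cexpl (Copp lam) t) = RC 1.
Proof.
  rewrite !Cexpl_eq. cx.
  replace (- re lam * t) with (- (re lam * t)) by ring. replace (- im lam * t) with (- (im lam * t)) by ring.
  rewrite cos_neg, sin_neg. assert (H := sin2_cos2 (im lam * t)). unfold Rsqr in H.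
  assert (E : exp (re lam * t) * exp (- (re lam * t)) = 1).
  { rewrite <- exp_plus. replace (re lam * t + - (re lam * t)) with 0 by ring. apply exp_0. }
  cpx.
  - replace (exp (re lam * t) * cos (im lam * t) * (exp (- (re lam * t)) * cos (im lam * t)) -
      exp (re lam * t) * sin (im lam * t) * (exp (- (re lam * t)) * - sin (im lam * t))) with
      ((exp (re lam * t) * exp (- (re lam * t))) * (sin (im lam * t) * sin (im lam * t) + cos (im lam * t) * cos (im lam * t))) by ring.
    rewrite E, H; ring.
  - ring.
Qed.

Lemma lim0 f : continuity_pt f 0 -> (forall t, 0 < t -> f t = 0) -> f 0 = 0.
Proof.
  intros Hc Hz. destruct (Req_dec (f 0) 0) as [|Hne]; auto. exfalso.
  unfold continuity_pt, continue_in, limit1_in, limit_in in Hc. simpl in Hc. unfold R_dist in Hc.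
  destruct (Hc (Rabs (f 0))) as [d [Hd H]]. apply Rabs_pos_lt; auto.
  assert (H1 := H (d / 2)). rewrite Hz in H1 by lra.
  rewrite Rminus_0_l, Rabs_Ropp in H1. assert (Rabs (f 0) < Rabs (f 0)); [|lra].
  apply H1. split. split; [exact I| lra]. rewrite Rminus_0_r, Rabs_pos_eq; lra.
Qed.

Lemma C3scal_scal a b x : C3scal a (C3scal b x) = C3scal (Cmul a b) x.
Proof. c3x; ring. Qed.

Lemma ode1 (h : R -> C3) (lam : C) : C3cont h -> (forall t, 0 < t -> C3D h t (C3scal lam (h t))) ->
  forall t, 0 <= t -> h t = C3scal (Cexpl lam t) (h 0).
Proof.
  intros Hc HD.
  set (K := fun t => C3scal (Cexpl (Copp lam) t) (h t)).
  assert (KD : forall t, 0 < t -> C3D K t (C3scal (RC 0) (h t))).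
  { intros t Ht. eapply C3D_ext. apply C3D_scal. apply CD_Cexpl. apply HD; auto.
    intros; reflexivity. c3x; ring. }
  assert (KC : C3cont K).
  { apply C3cont_scal; auto. apply Ccont_CD; intros; eexists; apply CD_Cexpl. }
  assert (Kconst : forall t, 0 <= t -> K t = K 0).
  { intros t Ht. destruct Ht as [Ht| <-]; [|reflexivity].
    assert (G : forall g : R -> R, (forall x, continuity_pt g x) ->
       (forall x, 0 < x -> derivable_pt_lim g x 0) -> g t = g 0).
    { intros g Hg Hd.
      assert (pr : forall x, 0 < x < t -> derivable_pt g x) by (intros x Hx; exists 0; apply Hd; lra).
      assert (E := null_derivative_loc g 0 t pr (fun x _ => Hg x)).
      apply E. intros x P. apply derive_pt_eq_0. apply Hd; lra. lra. }
    destruct KC as [A [B C']].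
    assert (Z : forall x, 0 < x -> C3D K x zero3).
    { intros x Hx. eapply C3D_ext. apply KD; auto. intros; reflexivity. unfold zero3; c3x; ring. }
    c3x; [apply (G (fun s => re (c1 (K s)))) | apply (G (fun s => im (c1 (K s))))
         |apply (G (fun s => re (c2 (K s)))) | apply (G (fun s => im (c2 (K s))))
         |apply (G (fun s => re (c3 (K s)))) | apply (G (fun s => im (c3 (K s))))]; intros x;
    first [ apply (proj1 (A x)) | apply (proj2 (A x)) | apply (proj1 (B x)) | apply (proj2 (B x))
          | apply (proj1 (C' x)) | apply (proj2 (C' x))
          | intros Hx; destruct (Z x Hx) as [[Z1 Z2] [[Z3 Z4] [Z5 Z6]]]; assumption ]. }
  intros t Ht. assert (E := Kconst t Ht). unfold K in E.
  rewrite Cexpl_0 in E.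
  assert (E2 : h t = C3scal (Cexpl lam t) (C3scal (Cexpl (Copp lam) t) (h t))).
  { rewrite C3scal_scal, Cexpl_inv. c3x; ring. }
  rewrite E2, E. c3x; ring.
Qed.

Lemma CD_dotn f x l m : C3D f x l -> CD (fun s => dotn (f s) m) x (dotn l m).
Proof.
  intros [A [B C']]. unfold dotn.
  apply (CD_add (fun t => _) (fun t => _)); [apply (CD_add (fun t => _) (fun t => _))|];
  apply (CD_mulc (fun t => _)); auto.
Qed.
Lemma Ccont_dotn f m : C3cont f -> Ccont (fun s => dotn (f s) m).
Proof.
  intros [A [B C']]. unfold dotn.
  apply (Ccont_add (fun t => _) (fun t => _)); [apply (Ccont_add (fun t => _) (fun t => _))|];
  apply (Ccont_mul (fun t => _) (fun t => _)); auto; apply Ccont_const.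
Qed.
Lemma vec_decomp (a : C3) (n0 : R3) : dot n0 n0 = 1 ->
  a = C3add (Nproj n0 a) (C3opp (C3cross (C3cross a n0) n0)).
Proof.
  intros Hn. unfold Nproj, dotn, dot in *.
  destruct n0 as [n1 n2 n3]; destruct a as [[y1 y2] [y3 y4] [y5 y6]]; cbn [x1 x2 x3] in *.
  c3x; nsatz.
Qed.
Lemma C3norm2_zero a : C3norm2 a = 0 -> a = zero3.
Proof.
  unfold C3norm2, zero3. intros H.
  assert (K := pow2_ge_0 (re (c1 a))); assert (K2 := pow2_ge_0 (im (c1 a)));
  assert (K3 := pow2_ge_0 (re (c2 a))); assert (K4 := pow2_ge_0 (im (c2 a)));
  assert (K5 := pow2_ge_0 (re (c3 a))); assert (K6 := pow2_ge_0 (im (c3 a))).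
  rewrite <- !Rsqr_pow2 in *. c3x; apply Rsqr_0_uniq; lra.
Qed.
Lemma deriv_zero (g : R -> R) t L : 0 < t -> derivable_pt_lim g t L -> (forall s, 0 < s -> g s = 0) -> L = 0.
Proof.
  intros Ht D Z. assert (D' : derivable_pt_lim (fun _ => 0) t L).
  { apply (dloc g); auto. }
  eapply uniqueness_limite. apply D'. apply dconst.
Qed.

Lemma diff_bound t : 0 <= t ->
  t * t / 8 <= re (Cmul (RC (/2)) (Cadd (Cexpl (Copp sqrti) t) (Copp (Cexpl sqrti t)))) ^ 2 +
               im (Cmul (RC (/2)) (Cadd (Cexpl (Copp sqrti) t) (Copp (Cexpl sqrti t)))) ^ 2.
Proof.
  intros Ht. rewrite !Cexpl_eq, sqrti_eq. cx.
  replace (- r2 * t) with (- (r2 * t)) by ring. rewrite cos_neg, sin_neg.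
  set (x := r2 * t). set (a := exp x). set (b := exp (- x)). set (c := cos x). set (d := sin x).
  assert (Hcd : d * d + c * c = 1) by (assert (H := sin2_cos2 x); unfold Rsqr in H; auto).
  assert (Hx : 0 <= x) by (unfold x; assert (H := r2_pos); nra).
  assert (Ha : 1 + x <= a) by apply exp_ineq1_le.
  assert (Hb : 0 < b <= 1) by (split; [apply exp_pos| unfold b; rewrite <- exp_0; apply exp_le; lra]).
  assert (Hx2 : x * x = t * t / 2) by (unfold x; assert (H := r2_sq); nra).
  assert (E1 : x <= a - b) by lra.
  assert (E2 : (a - b) * (a - b) <= (a + b) * (a + b)) by nra.
  assert (E3 : x * x <= (a - b) * (a - b)) by nra.
  assert (E4 : (a - b) * (a - b) = (a - b) * (a - b) * (d * d + c * c)) by (rewrite Hcd; ring).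
  assert (0 <= d * d) by nra. assert (0 <= c * c) by nra.
  nra.
Qed.

Lemma ode_zero (n0 : R3) (om : R) (W Z dW dZ : R -> C3) (G : R -> R) (M : R) :
  dot n0 n0 = 1 -> 0 < om ->
  C3cont W -> C3cont Z ->
  (forall t, 0 < t -> C3D W t (dW t)) -> (forall t, 0 < t -> C3D Z t (dZ t)) ->
  (forall t, 0 < t -> C3add (C3cross (dZ t) n0) (C3scal (RC (1 / om)) (W t)) = zero3) ->
  (forall t, 0 < t -> C3add (C3opp (C3cross (dW t) n0)) (C3scal (mkC 0 om) (Z t)) = zero3) ->
  C3cross (W 0) n0 = zero3 ->
  (forall t, 0 <= t -> C3norm2 (W t) <= 2 * G t) ->
  (forall T, 0 <= T -> inhabited (Riemann_integrable G 0 T)) ->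
  (forall T (pr : Riemann_integrable G 0 T), 0 <= T -> RiemannInt pr <= M) ->
  forall t, 0 <= t -> W t = zero3 /\ Z t = zero3.
Proof.
  intros Hn Hom HWc HZc HWD HZD HA HB HW0 HG HGi HGM.
  assert (Hom' : om <> 0) by lra.
  assert (Wt : forall t, 0 < t -> W t = C3scal (RC (- om)) (C3cross (dZ t) n0)).
  { intros t Ht. transitivity (C3add (C3scal (RC om) (C3add (C3cross (dZ t) n0) (C3scal (RC (1 / om)) (W t))))
      (C3scal (RC (- om)) (C3cross (dZ t) n0))). c3x; field; auto.
    rewrite HA by auto. unfold zero3; c3x; ring. }
  assert (Zt : forall t, 0 < t -> Z t = C3scal (mkC 0 (- / om)) (C3cross (dW t) n0)).
  { intros t Ht. transitivity (C3add (C3scal (mkC 0 (- / om)) (C3add (C3opp (C3cross (dW t) n0)) (C3scal (mkC 0 om) (Z t))))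
      (C3scal (mkC 0 (- / om)) (C3cross (dW t) n0))). c3x; field; auto.
    rewrite HB by auto. unfold zero3; c3x; ring. }
  assert (Wtan : forall t, 0 < t -> dotn (W t) n0 = RC 0).
  { intros t Ht. rewrite Wt by auto. unfold dotn; cpx; ring. }
  assert (Ztan : forall t, 0 < t -> dotn (Z t) n0 = RC 0).
  { intros t Ht. rewrite Zt by auto. unfold dotn; cpx; ring. }
  assert (dWtan : forall t, 0 < t -> dotn (dW t) n0 = RC 0).
  { intros t Ht. destruct (CD_dotn _ _ _ n0 (HWD t Ht)) as [D1 D2]. cpx.
    apply (deriv_zero _ t _ Ht D1). intros s Hs; rewrite Wtan; auto.
    apply (deriv_zero _ t _ Ht D2). intros s Hs; rewrite Wtan; auto. }
  set (Y := fun t => C3cross (Z t) n0).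
  assert (dW_eq : forall t, 0 < t -> dW t = C3scal (mkC 0 (- om)) (Y t)).
  { intros t Ht. unfold Y. rewrite Zt by auto.
    replace (C3cross (C3scal (mkC 0 (- / om)) (C3cross (dW t) n0)) n0) with
      (C3scal (mkC 0 (- / om)) (C3cross (C3cross (dW t) n0) n0)) by (c3x; ring).
    rewrite cross2 by auto. c3x; field; auto. }
  assert (dY_eq : forall t, 0 < t -> C3cross (dZ t) n0 = C3scal (RC (- / om)) (W t)).
  { intros t Ht. transitivity (C3add (C3add (C3cross (dZ t) n0) (C3scal (RC (1 / om)) (W t)))
      (C3scal (RC (- / om)) (W t))). c3x; field; auto. rewrite HA by auto. unfold zero3; c3x; ring. }
  assert (HYc : C3cont Y) by (apply C3cont_cross; auto).
  set (sw := Cmul sqrti (RC om)).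
  set (hm := fun t => C3add (W t) (C3scal sw (Y t))).
  set (hp := fun t => C3add (W t) (C3scal (Copp sw) (Y t))).
  assert (Hs : 2 * r2 * r2 = 1) by (rewrite Rmult_assoc, r2_sq; field).
  assert (Hoi : om * / om = 1) by (field; auto).
  assert (hmD : forall t, 0 < t -> C3D hm t (C3scal (Copp sqrti) (hm t))).
  { intros t Ht. eapply C3D_ext. apply C3D_add. apply HWD; auto. apply (C3D_scal (fun _ => sw)). apply CD_const.
    apply C3D_cross, HZD; auto. intros; reflexivity.
    rewrite dW_eq, dY_eq by auto. unfold hm, sw. rewrite sqrti_eq.
    set (oi := / om) in *. clearbody oi. set (Yt := Y t). set (Wt0 := W t). clearbody Yt Wt0.
    destruct Yt as [[y1 y2] [y3 y4] [y5 y6]]; destruct Wt0 as [[w1 w2] [w3 w4] [w5 w6]].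
    clear -Hs Hoi. c3x; nsatz. }
  assert (hpD : forall t, 0 < t -> C3D hp t (C3scal sqrti (hp t))).
  { intros t Ht. eapply C3D_ext. apply C3D_add. apply HWD; auto. apply (C3D_scal (fun _ => Copp sw)). apply CD_const.
    apply C3D_cross, HZD; auto. intros; reflexivity.
    rewrite dW_eq, dY_eq by auto. unfold hp, sw. rewrite sqrti_eq.
    set (oi := / om) in *. clearbody oi. set (Yt := Y t). set (Wt0 := W t). clearbody Yt Wt0.
    destruct Yt as [[y1 y2] [y3 y4] [y5 y6]]; destruct Wt0 as [[w1 w2] [w3 w4] [w5 w6]].
    clear -Hs Hoi. c3x; nsatz. }
  assert (hmc : C3cont hm) by (apply C3cont_add; auto; apply C3cont_scal; auto; apply Ccont_const).
  assert (hpc : C3cont hp) by (apply C3cont_add; auto; apply C3cont_scal; auto; apply Ccont_const).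
  assert (Hm := ode1 hm _ hmc hmD). assert (Hp := ode1 hp _ hpc hpD).
  assert (W0 : W 0 = zero3).
  { assert (Hd : dotn (W 0) n0 = RC 0).
    { destruct (Ccont_dotn W n0 HWc 0) as [C1 C2]. cpx.
      apply (lim0 (fun s => re (dotn (W s) n0))); auto. intros; rewrite Wtan; auto.
      apply (lim0 (fun s => im (dotn (W s) n0))); auto. intros; rewrite Wtan; auto. }
    rewrite (vec_decomp (W 0) n0 Hn). unfold Nproj. rewrite Hd, HW0. unfold zero3; c3x; ring. }
  set (cc := C3scal sw (Y 0)).
  assert (Wform : forall t, 0 <= t -> W t = C3scal (Cmul (RC (/2)) (Cadd (Cexpl (Copp sqrti) t) (Copp (Cexpl sqrti t)))) cc).
  { intros t Ht. transitivity (C3scal (RC (/2)) (C3add (hm t) (hp t))).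
    unfold hm, hp. c3x; field.
    rewrite Hm, Hp by auto. unfold hm, hp, cc. rewrite W0. unfold zero3; c3x; ring. }
  set (N := C3norm2 cc).
  assert (HN : 0 <= N) by apply C3norm2_pos.
  assert (Glow : forall t, 0 <= t -> t * t * N / 16 <= G t).
  { intros t Ht. assert (H1 := HG t Ht). rewrite Wform, C3norm2_scal in H1 by auto.
    assert (H2 := diff_bound t Ht). fold N in H1. nra. }
  assert (N0 : N = 0).
  { destruct (Rle_lt_or_eq_dec 0 N HN) as [Npos|]; auto. exfalso.
    set (T := 48 * (Rabs M + 1) / N + 1).
    assert (HT : 1 <= T) by (unfold T; assert (0 <= 48 * (Rabs M + 1) / N) by
      (apply Rmult_le_pos; [assert (H := Rabs_pos M); lra | left; apply Rinv_0_lt_compat; auto]); lra).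
    destruct (HGi T) as [pr]; [lra|].
    assert (pr2 : Riemann_integrable (fun t => t * t * N / 16) 0 T).
    { apply continuity_implies_RiemannInt; [lra|]. intros x _.
      apply cmult. apply cmult. apply cmult. apply derivable_continuous_pt; eexists; apply did.
      apply derivable_continuous_pt; eexists; apply did. apply cconst. apply cconst. }
    assert (I1 : RiemannInt pr2 <= RiemannInt pr) by (apply RiemannInt_P19; [lra|]; intros; apply Glow; lra).
    assert (I2 : RiemannInt pr2 = T * T * T * N / 48 - 0 * 0 * 0 * N / 48).
    { apply (FTC_gen _ (fun t => t * t * t * N / 48)). lra.
      intros x. refine (dext _ _ _ _ _ (dmul _ _ x _ _ (did x) (dmul _ _ x _ _ (did x) (dmul _ _ x _ _ (did x) (dconst (N / 48) x)))) _ _).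
      intros; cbv beta; field. field.
      intros x. apply cmult. apply cmult. apply cmult. apply derivable_continuous_pt; eexists; apply did.
      apply derivable_continuous_pt; eexists; apply did. apply cconst. apply cconst. }
    assert (I3 := HGM T pr ltac:(lra)).
    assert (E : T * N = 48 * (Rabs M + 1) + N) by (unfold T; field; lra).
    assert (T1 : 1 <= T * T) by nra. assert (T2 : T <= T * T * T) by nra.
    assert (T * N <= T * T * T * N) by (apply Rmult_le_compat_r; lra).
    assert (HMa := Rle_abs M). lra. }
  assert (cc0 : cc = zero3) by (apply C3norm2_zero; auto).
  assert (Wz : forall t, 0 <= t -> W t = zero3).
  { intros t Ht. rewrite Wform, cc0 by auto. unfold zero3; c3x; ring. }
  assert (Yz : forall t, 0 <= t -> Y t = zero3).
  { intros t Ht.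
    assert (E : C3scal sw (Y t) = zero3).
    { transitivity (C3scal (RC (/2)) (C3add (hm t) (C3opp (hp t)))). unfold hm, hp. c3x; field.
      rewrite Hm, Hp by auto.
      assert (hm0 : hm 0 = cc) by (unfold hm, cc; rewrite W0; unfold zero3; c3x; ring).
      assert (hp0 : hp 0 = C3opp cc) by (unfold hp, cc; rewrite W0; unfold zero3; c3x; ring).
      rewrite hm0, hp0, cc0. unfold zero3; c3x; ring. }
    assert (Hr := r2_pos).
    transitivity (C3scal (mkC (/ (2 * r2 * om)) (- / (2 * r2 * om))) (C3scal sw (Y t))).
    unfold sw; rewrite sqrti_eq. c3x; field; split; lra.
    rewrite E. unfold zero3; c3x; ring. }
  intros t Ht. split; auto.
  destruct Ht as [Ht| <-].
  - rewrite (vec_decomp (Z t) n0 Hn). unfold Nproj. rewrite Ztan by auto.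
    fold (Y t). rewrite Yz by lra. unfold zero3; c3x; ring.
  - assert (Zp : forall t, 0 < t -> Z t = zero3).
    { intros t Ht. rewrite (vec_decomp (Z t) n0 Hn). unfold Nproj. rewrite Ztan by auto.
      fold (Y t). rewrite Yz by lra. unfold zero3; c3x; ring. }
    destruct HZc as [A [B C']]. unfold zero3.
    c3x; [apply (lim0 (fun s => re (c1 (Z s)))); [apply (proj1 (A 0))|]
         |apply (lim0 (fun s => im (c1 (Z s)))); [apply (proj2 (A 0))|]
         |apply (lim0 (fun s => re (c2 (Z s)))); [apply (proj1 (B 0))|]
         |apply (lim0 (fun s => im (c2 (Z s)))); [apply (proj2 (B 0))|]
         |apply (lim0 (fun s => re (c3 (Z s)))); [apply (proj1 (C' 0))|]
         |apply (lim0 (fun s => im (c3 (Z s)))); [apply (proj2 (C' 0))|]];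
    intros s Hs0; rewrite Zp; auto.
Qed.

Lemma C3D_cproj f x l : C3D f x l -> forall j, derivable_pt_lim (fun t => cproj j (f t)) x (cproj j l).
Proof.
  intros [[A1 A2] [[B1 B2] [C1 C2]]] j. do 5 (destruct j as [|j]; [assumption|]). assumption.
Qed.
Lemma C3D_of_cproj f x l : (forall j, derivable_pt_lim (fun t => cproj j (f t)) x (cproj j l)) -> C3D f x l.
Proof.
  intros H. split; [|split]; split;
  [apply (H 0%nat)|apply (H 1%nat)|apply (H 2%nat)|apply (H 3%nat)|apply (H 4%nat)|apply (H 5%nat)].
Qed.
Lemma C3D_opp f x l : C3D f x l -> C3D (fun t => C3opp (f t)) x (C3opp l).
Proof.
  intros H. eapply C3D_ext. apply (C3D_scal (fun _ => RC (-1))). apply CD_const. apply H.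
  intros; c3x; ring. c3x; ring.
Qed.
Lemma cont4_last F a b c x : cont4 F -> continuity_pt (fun t => F a b c t) x.
Proof.
  intros H. unfold continuity_pt, continue_in, limit1_in, limit_in. simpl. unfold R_dist.
  intros e He. destruct (H a b c x e He) as [d [Hd Hx]]. exists d; split; auto.
  intros y [_ Hy]. apply Hx; auto; rewrite Rminus_diag, Rabs_R0; auto.
Qed.

Lemma rep Gam (u' : R3 -> R -> C3) p : smoothGR_C3 Gam u' -> Gam p ->
  exists Ur : R -> C3, C3cont Ur /\ forall t, 0 <= t -> Ur t = u' p t.
Proof.
  intros S Hp.
  destruct (S 0%nat) as [H0 [S0 E0]]; destruct (S 1%nat) as [H1 [S1 E1]];
  destruct (S 2%nat) as [H2 [S2 E2]]; destruct (S 3%nat) as [H3 [S3 E3]];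
  destruct (S 4%nat) as [H4 [S4 E4]]; destruct (S 5%nat) as [H5 [S5 E5]].
  exists (fun t => mkC3 (mkC (H0 (x1 p) (x2 p) (x3 p) t) (H1 (x1 p) (x2 p) (x3 p) t))
                   (mkC (H2 (x1 p) (x2 p) (x3 p) t) (H3 (x1 p) (x2 p) (x3 p) t))
                   (mkC (H4 (x1 p) (x2 p) (x3 p) t) (H5 (x1 p) (x2 p) (x3 p) t))).
  split.
  - split; [|split]; intros t; split; cx; apply cont4_last; apply (Ck_cont 0%nat); [apply S0|apply S1|apply S2|apply S3|apply S4|apply S5].
  - intros t Ht. c3x; symmetry; [apply E0|apply E1|apply E2|apply E3|apply E4|apply E5]; auto.
Qed.

Lemma C3norm2_opp a : C3norm2 (C3opp a) = C3norm2 a.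
Proof. unfold C3norm2; cx; ring. Qed.

Theorem lemma4p1 (Gam : R3 -> Prop) (n : R3 -> R3) (omega : R) (k : nat)
  (f g : R3 -> R -> C3) (phi : R3 -> R3) :
  is_closed_surface Gam -> unit_normal_field Gam n -> 0 < omega ->
  inPk Gam k f -> inPk Gam k g ->
  smoothG_R3 Gam phi -> (forall p, Gam p -> dot (phi p) (n p) = 0) ->
  exists u v : R3 -> R -> C3,
    IsSolution Gam n omega f g phi u v /\
    (exists P Q : R3 -> R -> C3,
       inPk Gam (S k) P /\ inPk Gam (S k) Q /\
       forall p eta, Gam p -> 0 <= eta ->
         u p eta = C3scal (Edecay eta) (P p eta) /\
         v p eta = C3scal (Edecay eta) (Q p eta)) /\
    (forall u' v' : R3 -> R -> C3, IsSolution Gam n omega f g phi u' v' ->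
       forall p eta, Gam p -> 0 <= eta -> u' p eta = u p eta /\ v' p eta = v p eta).
Proof.
  intros _ [Hns Hnu] Hom [af [Haf Hfe]] [ag [Hag Hge]] Hphs Hphi.
  assert (Hn : forall p, Gam p -> dot (n p) (n p) = 1) by (intros p Hp; apply (Hnu p Hp)).
  assert (Hom' : omega <> 0) by lra.
  destruct (sG3_all Gam n omega k af ag phi Hns Hphs Haf Hag) as [SP SQ].
  set (u := usol n omega k af ag phi). set (v := vsol n omega k af ag phi).
  assert (Sol : IsSolution Gam n omega f g phi u v).
  { split; [apply sGR3_sol; auto|]. split; [apply sGR3_sol; auto|].
    split; [|split].
    - exists (solf (Lseq (PP n omega k af ag phi)) k), (solf (Lseq (QQ n omega k af ag phi)) k).
      split.
      + intros p eta j Hp He. split; apply C3D_cproj; [apply usol_D|apply vsol_D].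
      + intros p eta Hp He. split.
        * rewrite (Hfe p _ Hp) by lra. apply (sol_eq1 Gam); auto.
        * rewrite (Hge p _ Hp) by lra. apply sol_eq2; auto.
    - intros p Hp. apply (sol_bc Gam); auto.
    - intros p Hp. split; apply sol_integrable; intros; [apply PP_big|apply QQ_big]; auto. }
  exists u, v. split; [exact Sol|]. split.
  { exists (fun p e => C3poly (PP n omega k af ag phi) p e (S k)), (fun p e => C3poly (QQ n omega k af ag phi) p e (S k)).
    split; [|split].
    - exists (PP n omega k af ag phi). split; auto. intros j; apply sG3_iff; auto.
    - exists (QQ n omega k af ag phi). split; auto. intros j; apply sG3_iff; auto.
    - intros; split; reflexivity. }
  intros u' v' [Su' [Sv' [[du' [dv' [HD HE]]] [Hbc' Hint']]]] p eta Hp Heta.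
  destruct (rep Gam u' p Su' Hp) as [Ur [Urc Ure]].
  destruct (rep Gam v' p Sv' Hp) as [Vr [Vrc Vre]].
  assert (uD : forall t, C3D (fun s => u p s) t (solf (Lseq (PP n omega k af ag phi)) k p t)) by (intros; apply usol_D).
  assert (vD : forall t, C3D (fun s => v p s) t (solf (Lseq (QQ n omega k af ag phi)) k p t)) by (intros; apply vsol_D).
  set (W := fun t => C3add (Ur t) (C3opp (u p t))).
  set (Z := fun t => C3add (Vr t) (C3opp (v p t))).
  set (dW := fun t => C3add (du' p t) (C3opp (solf (Lseq (PP n omega k af ag phi)) k p t))).
  set (dZ := fun t => C3add (dv' p t) (C3opp (solf (Lseq (QQ n omega k af ag phi)) k p t))).
  destruct (Hint' p Hp) as [[Iu1 [Mu Iu2]] [Iv1 [Mv Iv2]]].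
  destruct (sol_integrable (PP n omega k af ag phi) k p) as [Io1 [Mo Io2]].
  { intros; apply PP_big; auto. }
  set (G := fun e => C3norm2 (u' p e) + 1 * C3norm2 (u p e)).
  assert (Hzero := ode_zero (n p) omega W Z dW dZ G (Mu + Mo) (Hn p Hp) Hom).
  destruct Hzero with (t := eta) as [Wz Zz]; auto.
  - apply C3cont_add; auto. apply C3cont_opp. apply C3cont_C3D; intros t; eexists; apply uD.
  - apply C3cont_add; auto. apply C3cont_opp. apply C3cont_C3D; intros t; eexists; apply vD.
  - intros t Ht. apply C3D_add; [|apply C3D_opp; apply uD].
    apply C3D_of_cproj. intros j. apply (dloc (fun s => cproj j (u' p s))); auto.
    intros s Hs; rewrite Ure; auto; lra. apply (HD p t j Hp Ht).
  - intros t Ht. apply C3D_add; [|apply C3D_opp; apply vD].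
    apply C3D_of_cproj. intros j. apply (dloc (fun s => cproj j (v' p s))); auto.
    intros s Hs; rewrite Vre; auto; lra. apply (HD p t j Hp Ht).
  - intros t Ht. unfold W, dZ. rewrite Ure by lra.
    transitivity (C3add (C3add (C3cross (dv' p t) (n p)) (C3scal (RC (1 / omega)) (u' p t)))
      (C3opp (C3add (C3cross (solf (Lseq (QQ n omega k af ag phi)) k p t) (n p)) (C3scal (RC (1 / omega)) (u p t))))).
    { c3x; ring. }
    destruct (HE p t Hp Ht) as [E1 _]. rewrite E1. unfold u. rewrite (sol_eq1 Gam) by auto.
    rewrite (Hfe p _ Hp) by lra. unfold zero3; c3x; ring.
  - intros t Ht. unfold Z, dW. rewrite Vre by lra.
    transitivity (C3add (C3add (C3opp (C3cross (du' p t) (n p))) (C3scal (mkC 0 omega) (v' p t)))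
      (C3opp (C3add (C3opp (C3cross (solf (Lseq (PP n omega k af ag phi)) k p t) (n p))) (C3scal (mkC 0 omega) (v p t))))).
    { c3x; ring. }
    destruct (HE p t Hp Ht) as [_ E2]. rewrite E2. unfold v. rewrite sol_eq2 by auto.
    rewrite (Hge p _ Hp) by lra. unfold zero3; c3x; ring.
  - unfold W. rewrite Ure by lra.
    transitivity (C3add (C3cross (u' p 0) (n p)) (C3opp (C3cross (u p 0) (n p)))). { c3x; ring. }
    rewrite (Hbc' p Hp). unfold u. rewrite (sol_bc Gam) by auto. unfold zero3; c3x; ring.
  - intros t Ht. unfold W, G. rewrite Ure by auto.
    eapply Rle_trans; [apply C3norm2_add|]. rewrite C3norm2_opp. lra.
  - intros T HT. destruct (Iu1 T HT) as [p1]. destruct (Io1 T HT) as [p2].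
    constructor. apply (RiemannInt_P10 1 p1 p2).
  - intros T pr HT. destruct (Iu1 T HT) as [p1]. destruct (Io1 T HT) as [p2].
    replace (RiemannInt pr) with (RiemannInt p1 + 1 * RiemannInt p2) by (symmetry; apply RiemannInt_P13). assert (A1 := Iu2 T p1 HT). assert (A2 := Io2 T p2 HT). lra.
  - unfold W in Wz. unfold Z in Zz. rewrite Ure in Wz by auto. rewrite Vre in Zz by auto.
    split.
    + transitivity (C3add (C3add (u' p eta) (C3opp (u p eta))) (u p eta)). c3x; ring.
      rewrite Wz. unfold zero3; c3x; ring.
    + transitivity (C3add (C3add (v' p eta) (C3opp (v p eta))) (v p eta)). c3x; ring.
      rewrite Zz. unfold zero3; c3x; ring.
Qed.
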